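(* There exist continuous functions $g_1,g_2,g_3,g_4:\mathrm{SO}(4)\to S^3\times S^3$ such that for every rotation $R\in\mathrm{SO}(4)$, $\mathbf{R}_{QQ}(g_i(R))=R$ for some $i\in\{1,2,3,4\}$.
   Context: Identify $\mathbb{R}^4$ with the quaternions via $(w,x,y,z)\leftrightarrow w+x\mathbf{i}+y\mathbf{j}+z\mathbf{k}$; $S^3$ is the set of unit quaternions. For $(\mathbf{q}_L,\mathbf{q}_R)\in S^3\times S^3$, $\mathbf{R}_{QQ}(\mathbf{q}_L,\mathbf{q}_R)\in\mathrm{SO}(4)$ is the rotation $\mathbf{p}\mapsto\mathbf{q}_L\mathbf{p}\mathbf{q}_R$ of $\mathbb{R}^4$. *)

(* Defs.v *)
From HB Require Import structures.
From mathcomp Require Import all_boot all_order all_algebra.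
From mathcomp Require Import all_classical all_reals all_analysis.
Set Implicit Arguments. Unset Strict Implicit. Unset Printing Implicit Defensive.
Import Order.TTheory GRing.Theory Num.Theory.
Import numFieldNormedType.Exports.
Local Open Scope classical_set_scope.
Local Open Scope ring_scope.

(* Quaternions: R^4 as row vectors 'rV[R]_4, (w,x,y,z) <-> w + x i + y j + z k,
   coordinate k of p is p 0 k with k = 0,1,2,3. *)
Definition qco (R : realType) (p : 'rV[R]_4) (k : nat) : R := p 0 (inord k).

Definition qmul (R : realType) (p q : 'rV[R]_4) : 'rV[R]_4 :=
  let a1 := qco p 0 in let b1 := qco p 1 in let c1 := qco p 2 in let d1 := qco p 3 in
  let a2 := qco q 0 in let b2 := qco q 1 in let c2 := qco q 2 in let d2 := qco q 3 in
  \row_(k < 4)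
    match val k with
    | 0%N => a1 * a2 - b1 * b2 - c1 * c2 - d1 * d2
    | 1%N => a1 * b2 + b1 * a2 + c1 * d2 - d1 * c2
    | 2%N => a1 * c2 - b1 * d2 + c1 * a2 + d1 * b2
    | _ => a1 * d2 + b1 * c2 - c1 * b2 + d1 * a2
    end.

Definition S3 (R : realType) : set 'rV[R]_4 :=
  [set p | \sum_(k < 4) p 0 k ^+ 2 = 1].

Definition SO4 (R : realType) : set 'M[R]_4 :=
  [set M | M^T *m M = 1%:M /\ \det M = 1].

Definition qe (R : realType) (j : 'I_4) : 'rV[R]_4 := \row_(k < 4) (k == j)%:R.

(* R_QQ(qL,qR): matrix (acting on column vectors) of p |-> qL p qR;
   column j is the image of the j-th standard basis vector. *)
Definition RQQ (R : realType) (qL qR : 'rV[R]_4) : 'M[R]_4 :=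
  \matrix_(i < 4, j < 4) (qmul (qmul qL (qe R j)) qR) 0 i.

Arguments S3 R : clear implicits.
Arguments SO4 R : clear implicits.

(* Main.v *)
Require Import Defs.
From HB Require Import structures.
From mathcomp Require Import all_boot all_order all_algebra.
From mathcomp Require Import all_classical all_reals all_analysis.
From mathcomp Require Import ring lra zify.
Import Order.TTheory GRing.Theory Num.Theory.
Import numFieldNormedType.Exports.
Set Implicit Arguments. Unset Strict Implicit. Unset Printing Implicit Defensive.
Local Open Scope classical_set_scope.
Local Open Scope ring_scope.
Section S.
Variable R : realType.
Local Notation q := (@qco R).

Lemma ord4 (i : 'I_4) : i = inord 0 \/ i = inord 1 \/ i = inord 2 \/ i = inord 3.
Proof.
case: i => [[|[|[|[|//]]]] h]; [left|right;left|right;right;left|right;right;right];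
  by apply: val_inj; rewrite /= inordK.
Qed.

Lemma sum4 (F : 'I_4 -> R) : \sum_(k < 4) F k = F (inord 0) + F (inord 1) + F (inord 2) + F (inord 3).
Proof.
rewrite !big_ord_recl big_ord0 addr0 !addrA.
by congr (_ + _ + _ + _); congr F; apply: val_inj; rewrite /= inordK.
Qed.

Lemma S3E (p : 'rV[R]_4) : S3 R p <-> q p 0 ^+ 2 + q p 1 ^+ 2 + q p 2 ^+ 2 + q p 3 ^+ 2 = 1.
Proof. by rewrite /S3 /= sum4. Qed.

Lemma mx4P (A B : 'M[R]_4) :
  (forall i j, (i < 4)%N -> (j < 4)%N -> A (inord i) (inord j) = B (inord i) (inord j)) -> A = B.
Proof.
move=> H; apply/matrixP => i j; rewrite -(inord_val i) -(inord_val j); exact: H.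
Qed.

Lemma qM0 (a b : 'rV[R]_4) : q (qmul a b) 0 = q a 0 * q b 0 - q a 1 * q b 1 - q a 2 * q b 2 - q a 3 * q b 3.
Proof. by rewrite /qco /qmul mxE /= inordK. Qed.
Lemma qM1 (a b : 'rV[R]_4) : q (qmul a b) 1 = q a 0 * q b 1 + q a 1 * q b 0 + q a 2 * q b 3 - q a 3 * q b 2.
Proof. by rewrite /qco /qmul mxE /= inordK. Qed.
Lemma qM2 (a b : 'rV[R]_4) : q (qmul a b) 2 = q a 0 * q b 2 - q a 1 * q b 3 + q a 2 * q b 0 + q a 3 * q b 1.
Proof. by rewrite /qco /qmul mxE /= inordK. Qed.
Lemma qM3 (a b : 'rV[R]_4) : q (qmul a b) 3 = q a 0 * q b 3 + q a 1 * q b 2 - q a 2 * q b 1 + q a 3 * q b 0.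
Proof. by rewrite /qco /qmul mxE /= inordK. Qed.

Lemma qeE (j k : nat) : (j < 4)%N -> (k < 4)%N -> q (qe R (inord j)) k = (k == j)%:R.
Proof.
move=> hj hk; rewrite /qco /qe mxE; congr (_%:R).
case: (eqVneq k j) => [->|neq]; first by rewrite !eqxx.
case: eqP => // /(congr1 val); rewrite /= !inordK // => E.
by rewrite E eqxx in neq.
Qed.

Definition mkq (x0 x1 x2 x3 : R) : 'rV[R]_4 :=
  \row_(k < 4) match val k with 0%N => x0 | 1%N => x1 | 2%N => x2 | _ => x3 end.
Lemma mkq0 x0 x1 x2 x3 : q (mkq x0 x1 x2 x3) 0 = x0. Proof. by rewrite /qco mxE /= inordK. Qed.
Lemma mkq1 x0 x1 x2 x3 : q (mkq x0 x1 x2 x3) 1 = x1. Proof. by rewrite /qco mxE /= inordK. Qed.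
Lemma mkq2 x0 x1 x2 x3 : q (mkq x0 x1 x2 x3) 2 = x2. Proof. by rewrite /qco mxE /= inordK. Qed.
Lemma mkq3 x0 x1 x2 x3 : q (mkq x0 x1 x2 x3) 3 = x3. Proof. by rewrite /qco mxE /= inordK. Qed.
Lemma qZ (x : R) (p : 'rV[R]_4) k : q (x *: p) k = x * q p k. Proof. by rewrite /qco mxE. Qed.
Lemma qD (p p' : 'rV[R]_4) k : q (p + p') k = q p k + q p' k. Proof. by rewrite /qco mxE. Qed.

Lemma q4P (a b : 'rV[R]_4) : q a 0 = q b 0 -> q a 1 = q b 1 -> q a 2 = q b 2 -> q a 3 = q b 3 -> a = b.
Proof.
move=> h0 h1 h2 h3; apply/rowP => k; rewrite -(inord_val k).
by case: (ord4 k) => [->|[->|[->|->]]]; rewrite inordK.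
Qed.

Definition rq (a b : 'rV[R]_4) (i j : nat) : R :=
  match i, j with
  | 0, 0 => qco a 0 * qco b 0 - qco a 1 * qco b 1 - qco a 2 * qco b 2 - qco a 3 * qco b 3
  | 0, 1 => - qco a 0 * qco b 1 - qco a 1 * qco b 0 + qco a 2 * qco b 3 - qco a 3 * qco b 2
  | 0, 2 => - qco a 0 * qco b 2 - qco a 1 * qco b 3 - qco a 2 * qco b 0 + qco a 3 * qco b 1
  | 0, 3 => - qco a 0 * qco b 3 + qco a 1 * qco b 2 - qco a 2 * qco b 1 - qco a 3 * qco b 0
  | 1, 0 => qco a 0 * qco b 1 + qco a 1 * qco b 0 + qco a 2 * qco b 3 - qco a 3 * qco b 2
  | 1, 1 => qco a 0 * qco b 0 - qco a 1 * qco b 1 + qco a 2 * qco b 2 + qco a 3 * qco b 3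
  | 1, 2 => qco a 0 * qco b 3 - qco a 1 * qco b 2 - qco a 2 * qco b 1 - qco a 3 * qco b 0
  | 1, 3 => - qco a 0 * qco b 2 - qco a 1 * qco b 3 + qco a 2 * qco b 0 - qco a 3 * qco b 1
  | 2, 0 => qco a 0 * qco b 2 - qco a 1 * qco b 3 + qco a 2 * qco b 0 + qco a 3 * qco b 1
  | 2, 1 => - qco a 0 * qco b 3 - qco a 1 * qco b 2 - qco a 2 * qco b 1 + qco a 3 * qco b 0
  | 2, 2 => qco a 0 * qco b 0 + qco a 1 * qco b 1 - qco a 2 * qco b 2 + qco a 3 * qco b 3
  | 2, 3 => qco a 0 * qco b 1 - qco a 1 * qco b 0 - qco a 2 * qco b 3 - qco a 3 * qco b 2
  | 3, 0 => qco a 0 * qco b 3 + qco a 1 * qco b 2 - qco a 2 * qco b 1 + qco a 3 * qco b 0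
  | 3, 1 => qco a 0 * qco b 2 - qco a 1 * qco b 3 - qco a 2 * qco b 0 - qco a 3 * qco b 1
  | 3, 2 => - qco a 0 * qco b 1 + qco a 1 * qco b 0 - qco a 2 * qco b 3 - qco a 3 * qco b 2
  | _, _ => qco a 0 * qco b 0 + qco a 1 * qco b 1 + qco a 2 * qco b 2 - qco a 3 * qco b 3
  end.
Definition Kf (M : 'M[R]_4) (k l : nat) : R :=
  match k, l with
  | 0, 0 => 4^-1 * (M (inord 0) (inord 0) + M (inord 1) (inord 1) + M (inord 2) (inord 2) + M (inord 3) (inord 3))
  | 0, 1 => 4^-1 * (- M (inord 0) (inord 1) + M (inord 1) (inord 0) + M (inord 2) (inord 3) - M (inord 3) (inord 2))
  | 0, 2 => 4^-1 * (- M (inord 0) (inord 2) - M (inord 1) (inord 3) + M (inord 2) (inord 0) + M (inord 3) (inord 1))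
  | 0, 3 => 4^-1 * (- M (inord 0) (inord 3) + M (inord 1) (inord 2) - M (inord 2) (inord 1) + M (inord 3) (inord 0))
  | 1, 0 => 4^-1 * (- M (inord 0) (inord 1) + M (inord 1) (inord 0) - M (inord 2) (inord 3) + M (inord 3) (inord 2))
  | 1, 1 => 4^-1 * (- M (inord 0) (inord 0) - M (inord 1) (inord 1) + M (inord 2) (inord 2) + M (inord 3) (inord 3))
  | 1, 2 => 4^-1 * (M (inord 0) (inord 3) - M (inord 1) (inord 2) - M (inord 2) (inord 1) + M (inord 3) (inord 0))
  | 1, 3 => 4^-1 * (- M (inord 0) (inord 2) - M (inord 1) (inord 3) - M (inord 2) (inord 0) - M (inord 3) (inord 1))
  | 2, 0 => 4^-1 * (- M (inord 0) (inord 2) + M (inord 1) (inord 3) + M (inord 2) (inord 0) - M (inord 3) (inord 1))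
  | 2, 1 => 4^-1 * (- M (inord 0) (inord 3) - M (inord 1) (inord 2) - M (inord 2) (inord 1) - M (inord 3) (inord 0))
  | 2, 2 => 4^-1 * (- M (inord 0) (inord 0) + M (inord 1) (inord 1) - M (inord 2) (inord 2) + M (inord 3) (inord 3))
  | 2, 3 => 4^-1 * (M (inord 0) (inord 1) + M (inord 1) (inord 0) - M (inord 2) (inord 3) - M (inord 3) (inord 2))
  | 3, 0 => 4^-1 * (- M (inord 0) (inord 3) - M (inord 1) (inord 2) + M (inord 2) (inord 1) + M (inord 3) (inord 0))
  | 3, 1 => 4^-1 * (M (inord 0) (inord 2) - M (inord 1) (inord 3) + M (inord 2) (inord 0) - M (inord 3) (inord 1))
  | 3, 2 => 4^-1 * (- M (inord 0) (inord 1) - M (inord 1) (inord 0) - M (inord 2) (inord 3) - M (inord 3) (inord 2))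
  | _, _ => 4^-1 * (- M (inord 0) (inord 0) + M (inord 1) (inord 1) + M (inord 2) (inord 2) - M (inord 3) (inord 3))
  end.
Definition cfx (M : 'M[R]_4) (i j : nat) : R :=
  match i, j with
  | 0, 0 => (M (inord 1) (inord 1) * (M (inord 2) (inord 2) * M (inord 3) (inord 3) - M (inord 2) (inord 3) * M (inord 3) (inord 2)) - M (inord 1) (inord 2) * (M (inord 2) (inord 1) * M (inord 3) (inord 3) - M (inord 2) (inord 3) * M (inord 3) (inord 1)) + M (inord 1) (inord 3) * (M (inord 2) (inord 1) * M (inord 3) (inord 2) - M (inord 2) (inord 2) * M (inord 3) (inord 1)))
  | 0, 1 => - (M (inord 1) (inord 0) * (M (inord 2) (inord 2) * M (inord 3) (inord 3) - M (inord 2) (inord 3) * M (inord 3) (inord 2)) - M (inord 1) (inord 2) * (M (inord 2) (inord 0) * M (inord 3) (inord 3) - M (inord 2) (inord 3) * M (inord 3) (inord 0)) + M (inord 1) (inord 3) * (M (inord 2) (inord 0) * M (inord 3) (inord 2) - M (inord 2) (inord 2) * M (inord 3) (inord 0)))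
  | 0, 2 => (M (inord 1) (inord 0) * (M (inord 2) (inord 1) * M (inord 3) (inord 3) - M (inord 2) (inord 3) * M (inord 3) (inord 1)) - M (inord 1) (inord 1) * (M (inord 2) (inord 0) * M (inord 3) (inord 3) - M (inord 2) (inord 3) * M (inord 3) (inord 0)) + M (inord 1) (inord 3) * (M (inord 2) (inord 0) * M (inord 3) (inord 1) - M (inord 2) (inord 1) * M (inord 3) (inord 0)))
  | 0, 3 => - (M (inord 1) (inord 0) * (M (inord 2) (inord 1) * M (inord 3) (inord 2) - M (inord 2) (inord 2) * M (inord 3) (inord 1)) - M (inord 1) (inord 1) * (M (inord 2) (inord 0) * M (inord 3) (inord 2) - M (inord 2) (inord 2) * M (inord 3) (inord 0)) + M (inord 1) (inord 2) * (M (inord 2) (inord 0) * M (inord 3) (inord 1) - M (inord 2) (inord 1) * M (inord 3) (inord 0)))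
  | 1, 0 => - (M (inord 0) (inord 1) * (M (inord 2) (inord 2) * M (inord 3) (inord 3) - M (inord 2) (inord 3) * M (inord 3) (inord 2)) - M (inord 0) (inord 2) * (M (inord 2) (inord 1) * M (inord 3) (inord 3) - M (inord 2) (inord 3) * M (inord 3) (inord 1)) + M (inord 0) (inord 3) * (M (inord 2) (inord 1) * M (inord 3) (inord 2) - M (inord 2) (inord 2) * M (inord 3) (inord 1)))
  | 1, 1 => (M (inord 0) (inord 0) * (M (inord 2) (inord 2) * M (inord 3) (inord 3) - M (inord 2) (inord 3) * M (inord 3) (inord 2)) - M (inord 0) (inord 2) * (M (inord 2) (inord 0) * M (inord 3) (inord 3) - M (inord 2) (inord 3) * M (inord 3) (inord 0)) + M (inord 0) (inord 3) * (M (inord 2) (inord 0) * M (inord 3) (inord 2) - M (inord 2) (inord 2) * M (inord 3) (inord 0)))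
  | 1, 2 => - (M (inord 0) (inord 0) * (M (inord 2) (inord 1) * M (inord 3) (inord 3) - M (inord 2) (inord 3) * M (inord 3) (inord 1)) - M (inord 0) (inord 1) * (M (inord 2) (inord 0) * M (inord 3) (inord 3) - M (inord 2) (inord 3) * M (inord 3) (inord 0)) + M (inord 0) (inord 3) * (M (inord 2) (inord 0) * M (inord 3) (inord 1) - M (inord 2) (inord 1) * M (inord 3) (inord 0)))
  | 1, 3 => (M (inord 0) (inord 0) * (M (inord 2) (inord 1) * M (inord 3) (inord 2) - M (inord 2) (inord 2) * M (inord 3) (inord 1)) - M (inord 0) (inord 1) * (M (inord 2) (inord 0) * M (inord 3) (inord 2) - M (inord 2) (inord 2) * M (inord 3) (inord 0)) + M (inord 0) (inord 2) * (M (inord 2) (inord 0) * M (inord 3) (inord 1) - M (inord 2) (inord 1) * M (inord 3) (inord 0)))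
  | 2, 0 => (M (inord 0) (inord 1) * (M (inord 1) (inord 2) * M (inord 3) (inord 3) - M (inord 1) (inord 3) * M (inord 3) (inord 2)) - M (inord 0) (inord 2) * (M (inord 1) (inord 1) * M (inord 3) (inord 3) - M (inord 1) (inord 3) * M (inord 3) (inord 1)) + M (inord 0) (inord 3) * (M (inord 1) (inord 1) * M (inord 3) (inord 2) - M (inord 1) (inord 2) * M (inord 3) (inord 1)))
  | 2, 1 => - (M (inord 0) (inord 0) * (M (inord 1) (inord 2) * M (inord 3) (inord 3) - M (inord 1) (inord 3) * M (inord 3) (inord 2)) - M (inord 0) (inord 2) * (M (inord 1) (inord 0) * M (inord 3) (inord 3) - M (inord 1) (inord 3) * M (inord 3) (inord 0)) + M (inord 0) (inord 3) * (M (inord 1) (inord 0) * M (inord 3) (inord 2) - M (inord 1) (inord 2) * M (inord 3) (inord 0)))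
  | 2, 2 => (M (inord 0) (inord 0) * (M (inord 1) (inord 1) * M (inord 3) (inord 3) - M (inord 1) (inord 3) * M (inord 3) (inord 1)) - M (inord 0) (inord 1) * (M (inord 1) (inord 0) * M (inord 3) (inord 3) - M (inord 1) (inord 3) * M (inord 3) (inord 0)) + M (inord 0) (inord 3) * (M (inord 1) (inord 0) * M (inord 3) (inord 1) - M (inord 1) (inord 1) * M (inord 3) (inord 0)))
  | 2, 3 => - (M (inord 0) (inord 0) * (M (inord 1) (inord 1) * M (inord 3) (inord 2) - M (inord 1) (inord 2) * M (inord 3) (inord 1)) - M (inord 0) (inord 1) * (M (inord 1) (inord 0) * M (inord 3) (inord 2) - M (inord 1) (inord 2) * M (inord 3) (inord 0)) + M (inord 0) (inord 2) * (M (inord 1) (inord 0) * M (inord 3) (inord 1) - M (inord 1) (inord 1) * M (inord 3) (inord 0)))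
  | 3, 0 => - (M (inord 0) (inord 1) * (M (inord 1) (inord 2) * M (inord 2) (inord 3) - M (inord 1) (inord 3) * M (inord 2) (inord 2)) - M (inord 0) (inord 2) * (M (inord 1) (inord 1) * M (inord 2) (inord 3) - M (inord 1) (inord 3) * M (inord 2) (inord 1)) + M (inord 0) (inord 3) * (M (inord 1) (inord 1) * M (inord 2) (inord 2) - M (inord 1) (inord 2) * M (inord 2) (inord 1)))
  | 3, 1 => (M (inord 0) (inord 0) * (M (inord 1) (inord 2) * M (inord 2) (inord 3) - M (inord 1) (inord 3) * M (inord 2) (inord 2)) - M (inord 0) (inord 2) * (M (inord 1) (inord 0) * M (inord 2) (inord 3) - M (inord 1) (inord 3) * M (inord 2) (inord 0)) + M (inord 0) (inord 3) * (M (inord 1) (inord 0) * M (inord 2) (inord 2) - M (inord 1) (inord 2) * M (inord 2) (inord 0)))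
  | 3, 2 => - (M (inord 0) (inord 0) * (M (inord 1) (inord 1) * M (inord 2) (inord 3) - M (inord 1) (inord 3) * M (inord 2) (inord 1)) - M (inord 0) (inord 1) * (M (inord 1) (inord 0) * M (inord 2) (inord 3) - M (inord 1) (inord 3) * M (inord 2) (inord 0)) + M (inord 0) (inord 3) * (M (inord 1) (inord 0) * M (inord 2) (inord 1) - M (inord 1) (inord 1) * M (inord 2) (inord 0)))
  | _, _ => (M (inord 0) (inord 0) * (M (inord 1) (inord 1) * M (inord 2) (inord 2) - M (inord 1) (inord 2) * M (inord 2) (inord 1)) - M (inord 0) (inord 1) * (M (inord 1) (inord 0) * M (inord 2) (inord 2) - M (inord 1) (inord 2) * M (inord 2) (inord 0)) + M (inord 0) (inord 2) * (M (inord 1) (inord 0) * M (inord 2) (inord 1) - M (inord 1) (inord 1) * M (inord 2) (inord 0)))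
  end.

Lemma det3 (A : 'M[R]_3) : \det A =
  A (inord 0) (inord 0) * (A (inord 1) (inord 1) * A (inord 2) (inord 2) - A (inord 1) (inord 2) * A (inord 2) (inord 1))
 - A (inord 0) (inord 1) * (A (inord 1) (inord 0) * A (inord 2) (inord 2) - A (inord 1) (inord 2) * A (inord 2) (inord 0))
 + A (inord 0) (inord 2) * (A (inord 1) (inord 0) * A (inord 2) (inord 1) - A (inord 1) (inord 1) * A (inord 2) (inord 0)).
Proof.
set f := fun a b : nat => A (inord a) (inord b).
rewrite -/(f 0 0) -/(f 0 1) -/(f 0 2) -/(f 1 0) -/(f 1 1) -/(f 1 2) -/(f 2 0) -/(f 2 1) -/(f 2 2).
have -> : A = \matrix_(i,j) f i j by apply/matrixP => i j; rewrite mxE /f !inord_val.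
rewrite (expand_det_row _ ord0) !big_ord_recl big_ord0 /cofactor.
rewrite !(expand_det_row _ ord0) !big_ord_recl !big_ord0 /cofactor !det_mx11 !mxE /=.
rewrite /bump /= ?(addn0, add0n, add1n).
ring.
Qed.

Ltac qsimp := rewrite ?(qM0, qM1, qM2, qM3) ?qeE ?mkq0 ?mkq1 ?mkq2 ?mkq3 //=.

Lemma RQQE (a b : 'rV[R]_4) (i j : nat) : (i < 4)%N -> (j < 4)%N -> RQQ a b (inord i) (inord j) = rq a b i j.
Proof.
rewrite /RQQ; case: i => [|[|[|[|//]]]] _; case: j => [|[|[|[|//]]]] _;
 rewrite mxE -/(qco _ _) /rq; qsimp.
all: rewrite /=; ring.
Qed.

Lemma K_RQQ (a b : 'rV[R]_4) k l : (k < 4)%N -> (l < 4)%N -> Kf (RQQ a b) k l = q a k * q b l.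
Proof.
case: k => [|[|[|[|//]]]] _; case: l => [|[|[|[|//]]]] _; rewrite /Kf /= !RQQE // /rq /=; lra.
Qed.

Lemma RQQ_of_K (a b : 'rV[R]_4) (M : 'M[R]_4) :
  (forall k l, (k < 4)%N -> (l < 4)%N -> q a k * q b l = Kf M k l) -> RQQ a b = M.
Proof.
move=> H; apply: mx4P => i j hi hj; rewrite RQQE //.
have h00 := H 0 0 isT isT; have h01 := H 0 1 isT isT; have h02 := H 0 2 isT isT; have h03 := H 0 3 isT isT.
have h10 := H 1 0 isT isT; have h11 := H 1 1 isT isT; have h12 := H 1 2 isT isT; have h13 := H 1 3 isT isT.
have h20 := H 2 0 isT isT; have h21 := H 2 1 isT isT; have h22 := H 2 2 isT isT; have h23 := H 2 3 isT isT.
have h30 := H 3 0 isT isT; have h31 := H 3 1 isT isT; have h32 := H 3 2 isT isT; have h33 := H 3 3 isT isT.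
rewrite /Kf /= in h00 h01 h02 h03 h10 h11 h12 h13 h20 h21 h22 h23 h30 h31 h32 h33.
move: hi hj; case: i => [|[|[|[|//]]]] _; case: j => [|[|[|[|//]]]] _; rewrite /rq; lra.
Qed.

Lemma cfxE (M : 'M[R]_4) i j : (i < 4)%N -> (j < 4)%N -> cofactor M (inord i) (inord j) = cfx M i j.
Proof.
have E : M = \matrix_(i0, j0) M (inord i0) (inord j0) by apply/matrixP => i0 j0; rewrite mxE !inord_val.
case: i => [|[|[|[|//]]]] _; case: j => [|[|[|[|//]]]] _;
rewrite [in LHS]E /cofactor det3 !mxE /= /bump !inordK //= ?(addn0, add0n, add1n) /cfx; ring.
Qed.

Definition detx (M : 'M[R]_4) : R := M (inord 0) (inord 0) * cfx M 0 0 + M (inord 0) (inord 1) * cfx M 0 1 + M (inord 0) (inord 2) * cfx M 0 2 + M (inord 0) (inord 3) * cfx M 0 3.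
Lemma jac0 (M : 'M[R]_4) : cfx M 0 0 * cfx M 1 1 - cfx M 0 1 * cfx M 1 0 = detx M * ((M (inord 2) (inord 2) * M (inord 3) (inord 3) - M (inord 2) (inord 3) * M (inord 3) (inord 2))).
Proof. rewrite /cfx /detx /=; ring. Qed.
Lemma jac1 (M : 'M[R]_4) : cfx M 0 0 * cfx M 1 2 - cfx M 0 2 * cfx M 1 0 = detx M * (- (M (inord 2) (inord 1) * M (inord 3) (inord 3) - M (inord 2) (inord 3) * M (inord 3) (inord 1))).
Proof. rewrite /cfx /detx /=; ring. Qed.
Lemma jac2 (M : 'M[R]_4) : cfx M 0 0 * cfx M 1 3 - cfx M 0 3 * cfx M 1 0 = detx M * ((M (inord 2) (inord 1) * M (inord 3) (inord 2) - M (inord 2) (inord 2) * M (inord 3) (inord 1))).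
Proof. rewrite /cfx /detx /=; ring. Qed.
Lemma jac3 (M : 'M[R]_4) : cfx M 0 1 * cfx M 1 2 - cfx M 0 2 * cfx M 1 1 = detx M * ((M (inord 2) (inord 0) * M (inord 3) (inord 3) - M (inord 2) (inord 3) * M (inord 3) (inord 0))).
Proof. rewrite /cfx /detx /=; ring. Qed.
Lemma jac4 (M : 'M[R]_4) : cfx M 0 1 * cfx M 1 3 - cfx M 0 3 * cfx M 1 1 = detx M * (- (M (inord 2) (inord 0) * M (inord 3) (inord 2) - M (inord 2) (inord 2) * M (inord 3) (inord 0))).
Proof. rewrite /cfx /detx /=; ring. Qed.
Lemma jac5 (M : 'M[R]_4) : cfx M 0 2 * cfx M 1 3 - cfx M 0 3 * cfx M 1 2 = detx M * ((M (inord 2) (inord 0) * M (inord 3) (inord 1) - M (inord 2) (inord 1) * M (inord 3) (inord 0))).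
Proof. rewrite /cfx /detx /=; ring. Qed.
Lemma jac6 (M : 'M[R]_4) : cfx M 0 0 * cfx M 2 1 - cfx M 0 1 * cfx M 2 0 = detx M * (- (M (inord 1) (inord 2) * M (inord 3) (inord 3) - M (inord 1) (inord 3) * M (inord 3) (inord 2))).
Proof. rewrite /cfx /detx /=; ring. Qed.
Lemma jac7 (M : 'M[R]_4) : cfx M 0 0 * cfx M 2 2 - cfx M 0 2 * cfx M 2 0 = detx M * ((M (inord 1) (inord 1) * M (inord 3) (inord 3) - M (inord 1) (inord 3) * M (inord 3) (inord 1))).
Proof. rewrite /cfx /detx /=; ring. Qed.
Lemma jac8 (M : 'M[R]_4) : cfx M 0 0 * cfx M 2 3 - cfx M 0 3 * cfx M 2 0 = detx M * (- (M (inord 1) (inord 1) * M (inord 3) (inord 2) - M (inord 1) (inord 2) * M (inord 3) (inord 1))).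
Proof. rewrite /cfx /detx /=; ring. Qed.
Lemma jac9 (M : 'M[R]_4) : cfx M 0 1 * cfx M 2 2 - cfx M 0 2 * cfx M 2 1 = detx M * (- (M (inord 1) (inord 0) * M (inord 3) (inord 3) - M (inord 1) (inord 3) * M (inord 3) (inord 0))).
Proof. rewrite /cfx /detx /=; ring. Qed.
Lemma jac10 (M : 'M[R]_4) : cfx M 0 1 * cfx M 2 3 - cfx M 0 3 * cfx M 2 1 = detx M * ((M (inord 1) (inord 0) * M (inord 3) (inord 2) - M (inord 1) (inord 2) * M (inord 3) (inord 0))).
Proof. rewrite /cfx /detx /=; ring. Qed.
Lemma jac11 (M : 'M[R]_4) : cfx M 0 2 * cfx M 2 3 - cfx M 0 3 * cfx M 2 2 = detx M * (- (M (inord 1) (inord 0) * M (inord 3) (inord 1) - M (inord 1) (inord 1) * M (inord 3) (inord 0))).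
Proof. rewrite /cfx /detx /=; ring. Qed.
Lemma jac12 (M : 'M[R]_4) : cfx M 0 0 * cfx M 3 1 - cfx M 0 1 * cfx M 3 0 = detx M * ((M (inord 1) (inord 2) * M (inord 2) (inord 3) - M (inord 1) (inord 3) * M (inord 2) (inord 2))).
Proof. rewrite /cfx /detx /=; ring. Qed.
Lemma jac13 (M : 'M[R]_4) : cfx M 0 0 * cfx M 3 2 - cfx M 0 2 * cfx M 3 0 = detx M * (- (M (inord 1) (inord 1) * M (inord 2) (inord 3) - M (inord 1) (inord 3) * M (inord 2) (inord 1))).
Proof. rewrite /cfx /detx /=; ring. Qed.
Lemma jac14 (M : 'M[R]_4) : cfx M 0 0 * cfx M 3 3 - cfx M 0 3 * cfx M 3 0 = detx M * ((M (inord 1) (inord 1) * M (inord 2) (inord 2) - M (inord 1) (inord 2) * M (inord 2) (inord 1))).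
Proof. rewrite /cfx /detx /=; ring. Qed.
Lemma jac15 (M : 'M[R]_4) : cfx M 0 1 * cfx M 3 2 - cfx M 0 2 * cfx M 3 1 = detx M * ((M (inord 1) (inord 0) * M (inord 2) (inord 3) - M (inord 1) (inord 3) * M (inord 2) (inord 0))).
Proof. rewrite /cfx /detx /=; ring. Qed.
Lemma jac16 (M : 'M[R]_4) : cfx M 0 1 * cfx M 3 3 - cfx M 0 3 * cfx M 3 1 = detx M * (- (M (inord 1) (inord 0) * M (inord 2) (inord 2) - M (inord 1) (inord 2) * M (inord 2) (inord 0))).
Proof. rewrite /cfx /detx /=; ring. Qed.
Lemma jac17 (M : 'M[R]_4) : cfx M 0 2 * cfx M 3 3 - cfx M 0 3 * cfx M 3 2 = detx M * ((M (inord 1) (inord 0) * M (inord 2) (inord 1) - M (inord 1) (inord 1) * M (inord 2) (inord 0))).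
Proof. rewrite /cfx /detx /=; ring. Qed.
Lemma jac18 (M : 'M[R]_4) : cfx M 1 0 * cfx M 2 1 - cfx M 1 1 * cfx M 2 0 = detx M * ((M (inord 0) (inord 2) * M (inord 3) (inord 3) - M (inord 0) (inord 3) * M (inord 3) (inord 2))).
Proof. rewrite /cfx /detx /=; ring. Qed.
Lemma jac19 (M : 'M[R]_4) : cfx M 1 0 * cfx M 2 2 - cfx M 1 2 * cfx M 2 0 = detx M * (- (M (inord 0) (inord 1) * M (inord 3) (inord 3) - M (inord 0) (inord 3) * M (inord 3) (inord 1))).
Proof. rewrite /cfx /detx /=; ring. Qed.
Lemma jac20 (M : 'M[R]_4) : cfx M 1 0 * cfx M 2 3 - cfx M 1 3 * cfx M 2 0 = detx M * ((M (inord 0) (inord 1) * M (inord 3) (inord 2) - M (inord 0) (inord 2) * M (inord 3) (inord 1))).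
Proof. rewrite /cfx /detx /=; ring. Qed.
Lemma jac21 (M : 'M[R]_4) : cfx M 1 1 * cfx M 2 2 - cfx M 1 2 * cfx M 2 1 = detx M * ((M (inord 0) (inord 0) * M (inord 3) (inord 3) - M (inord 0) (inord 3) * M (inord 3) (inord 0))).
Proof. rewrite /cfx /detx /=; ring. Qed.
Lemma jac22 (M : 'M[R]_4) : cfx M 1 1 * cfx M 2 3 - cfx M 1 3 * cfx M 2 1 = detx M * (- (M (inord 0) (inord 0) * M (inord 3) (inord 2) - M (inord 0) (inord 2) * M (inord 3) (inord 0))).
Proof. rewrite /cfx /detx /=; ring. Qed.
Lemma jac23 (M : 'M[R]_4) : cfx M 1 2 * cfx M 2 3 - cfx M 1 3 * cfx M 2 2 = detx M * ((M (inord 0) (inord 0) * M (inord 3) (inord 1) - M (inord 0) (inord 1) * M (inord 3) (inord 0))).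
Proof. rewrite /cfx /detx /=; ring. Qed.
Lemma jac24 (M : 'M[R]_4) : cfx M 1 0 * cfx M 3 1 - cfx M 1 1 * cfx M 3 0 = detx M * (- (M (inord 0) (inord 2) * M (inord 2) (inord 3) - M (inord 0) (inord 3) * M (inord 2) (inord 2))).
Proof. rewrite /cfx /detx /=; ring. Qed.
Lemma jac25 (M : 'M[R]_4) : cfx M 1 0 * cfx M 3 2 - cfx M 1 2 * cfx M 3 0 = detx M * ((M (inord 0) (inord 1) * M (inord 2) (inord 3) - M (inord 0) (inord 3) * M (inord 2) (inord 1))).
Proof. rewrite /cfx /detx /=; ring. Qed.
Lemma jac26 (M : 'M[R]_4) : cfx M 1 0 * cfx M 3 3 - cfx M 1 3 * cfx M 3 0 = detx M * (- (M (inord 0) (inord 1) * M (inord 2) (inord 2) - M (inord 0) (inord 2) * M (inord 2) (inord 1))).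
Proof. rewrite /cfx /detx /=; ring. Qed.
Lemma jac27 (M : 'M[R]_4) : cfx M 1 1 * cfx M 3 2 - cfx M 1 2 * cfx M 3 1 = detx M * (- (M (inord 0) (inord 0) * M (inord 2) (inord 3) - M (inord 0) (inord 3) * M (inord 2) (inord 0))).
Proof. rewrite /cfx /detx /=; ring. Qed.
Lemma jac28 (M : 'M[R]_4) : cfx M 1 1 * cfx M 3 3 - cfx M 1 3 * cfx M 3 1 = detx M * ((M (inord 0) (inord 0) * M (inord 2) (inord 2) - M (inord 0) (inord 2) * M (inord 2) (inord 0))).
Proof. rewrite /cfx /detx /=; ring. Qed.
Lemma jac29 (M : 'M[R]_4) : cfx M 1 2 * cfx M 3 3 - cfx M 1 3 * cfx M 3 2 = detx M * (- (M (inord 0) (inord 0) * M (inord 2) (inord 1) - M (inord 0) (inord 1) * M (inord 2) (inord 0))).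
Proof. rewrite /cfx /detx /=; ring. Qed.
Lemma jac30 (M : 'M[R]_4) : cfx M 2 0 * cfx M 3 1 - cfx M 2 1 * cfx M 3 0 = detx M * ((M (inord 0) (inord 2) * M (inord 1) (inord 3) - M (inord 0) (inord 3) * M (inord 1) (inord 2))).
Proof. rewrite /cfx /detx /=; ring. Qed.
Lemma jac31 (M : 'M[R]_4) : cfx M 2 0 * cfx M 3 2 - cfx M 2 2 * cfx M 3 0 = detx M * (- (M (inord 0) (inord 1) * M (inord 1) (inord 3) - M (inord 0) (inord 3) * M (inord 1) (inord 1))).
Proof. rewrite /cfx /detx /=; ring. Qed.
Lemma jac32 (M : 'M[R]_4) : cfx M 2 0 * cfx M 3 3 - cfx M 2 3 * cfx M 3 0 = detx M * ((M (inord 0) (inord 1) * M (inord 1) (inord 2) - M (inord 0) (inord 2) * M (inord 1) (inord 1))).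
Proof. rewrite /cfx /detx /=; ring. Qed.
Lemma jac33 (M : 'M[R]_4) : cfx M 2 1 * cfx M 3 2 - cfx M 2 2 * cfx M 3 1 = detx M * ((M (inord 0) (inord 0) * M (inord 1) (inord 3) - M (inord 0) (inord 3) * M (inord 1) (inord 0))).
Proof. rewrite /cfx /detx /=; ring. Qed.
Lemma jac34 (M : 'M[R]_4) : cfx M 2 1 * cfx M 3 3 - cfx M 2 3 * cfx M 3 1 = detx M * (- (M (inord 0) (inord 0) * M (inord 1) (inord 2) - M (inord 0) (inord 2) * M (inord 1) (inord 0))).
Proof. rewrite /cfx /detx /=; ring. Qed.
Lemma jac35 (M : 'M[R]_4) : cfx M 2 2 * cfx M 3 3 - cfx M 2 3 * cfx M 3 2 = detx M * ((M (inord 0) (inord 0) * M (inord 1) (inord 1) - M (inord 0) (inord 1) * M (inord 1) (inord 0))).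
Proof. rewrite /cfx /detx /=; ring. Qed.

Lemma so4_scalar (M : 'M[R]_4) : SO4 R M ->
  (forall i j, (i < 4)%N -> (j < 4)%N -> \sum_(k < 4) M k (inord i) * M k (inord j) = (i == j)%:R) /\
  (forall i j, (i < 4)%N -> (j < 4)%N -> \sum_(k < 4) M (inord i) k * M (inord j) k = (i == j)%:R) /\
  (forall i j, (i < 4)%N -> (j < 4)%N -> M (inord i) (inord j) = cfx M i j) /\ detx M = 1.
Proof.
move=> [H1 Hd].
have H2 := mulmx1C H1.
have Hadj : M^T = \adj M.
  by rewrite -[M^T]mulmx1 -Hd -mul_mx_adj mulmxA H1 mul1mx.
have ieq i j : (i < 4)%N -> (j < 4)%N -> ((@inord 3 i) == inord j) = (i == j).
  move=> hi hj; case: (eqVneq i j) => [->|neq]; first by rewrite !eqxx.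
  case: eqP => // /(congr1 val); rewrite /= !inordK // => E.
  by rewrite E eqxx in neq.
split; [|split; [|split]].
- move=> i j hi hj; have := congr1 (fun A : 'M[R]_4 => A (inord i) (inord j)) H1.
  rewrite /= !mxE ieq // => <-; by apply: eq_bigr => k _; rewrite mxE.
- move=> i j hi hj; have := congr1 (fun A : 'M[R]_4 => A (inord i) (inord j)) H2.
  rewrite /= !mxE ieq // => <-; by apply: eq_bigr => k _; rewrite mxE.
- move=> i j hi hj; have := congr1 (fun A : 'M[R]_4 => A (inord j) (inord i)) Hadj.
  by rewrite !mxE cfxE.
- rewrite -Hd (expand_det_row _ (inord 0)) sum4 !cfxE //.
Qed.

End S.
Section S.
Variable R : realType.
Local Notation q := (@qco R).
Lemma mn0101 (M : 'M[R]_4) (MtM : forall i j, (i < 4)%N -> (j < 4)%N -> \sum_(k < 4) M k (inord i) * M k (inord j) = (i == j)%:R)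
  (MMt : forall i j, (i < 4)%N -> (j < 4)%N -> \sum_(k < 4) M (inord i) k * M (inord j) k = (i == j)%:R)
  (Hcof : forall i j, (i < 4)%N -> (j < 4)%N -> M (inord i) (inord j) = cfx M i j) (Hdet : detx M = 1) :
  Kf M 0 0 * Kf M 1 1 = Kf M 0 1 * Kf M 1 0.
Proof.
have o00 := MtM 0 0 isT isT; rewrite sum4 /= in o00.
have o11 := MtM 1 1 isT isT; rewrite sum4 /= in o11.
have p22 := MMt 2 2 isT isT; rewrite sum4 /= in p22.
have p33 := MMt 3 3 isT isT; rewrite sum4 /= in p33.
have j0 := jac0 M; rewrite Hdet mul1r -!Hcof // in j0.
clear MtM MMt Hcof Hdet; rewrite /Kf /=; lra.
Qed.
Lemma mn0102 (M : 'M[R]_4) (MtM : forall i j, (i < 4)%N -> (j < 4)%N -> \sum_(k < 4) M k (inord i) * M k (inord j) = (i == j)%:R)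
  (MMt : forall i j, (i < 4)%N -> (j < 4)%N -> \sum_(k < 4) M (inord i) k * M (inord j) k = (i == j)%:R)
  (Hcof : forall i j, (i < 4)%N -> (j < 4)%N -> M (inord i) (inord j) = cfx M i j) (Hdet : detx M = 1) :
  Kf M 0 0 * Kf M 1 2 = Kf M 0 2 * Kf M 1 0.
Proof.
have p03 := MMt 0 3 isT isT; rewrite sum4 /= in p03.
have o03 := MtM 0 3 isT isT; rewrite sum4 /= in o03.
have p12 := MMt 1 2 isT isT; rewrite sum4 /= in p12.
have o12 := MtM 1 2 isT isT; rewrite sum4 /= in o12.
have j1 := jac1 M; rewrite Hdet mul1r -!Hcof // in j1.
have j4 := jac4 M; rewrite Hdet mul1r -!Hcof // in j4.
have j6 := jac6 M; rewrite Hdet mul1r -!Hcof // in j6.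
have j11 := jac11 M; rewrite Hdet mul1r -!Hcof // in j11.
clear MtM MMt Hcof Hdet; rewrite /Kf /=; lra.
Qed.
Lemma mn0103 (M : 'M[R]_4) (MtM : forall i j, (i < 4)%N -> (j < 4)%N -> \sum_(k < 4) M k (inord i) * M k (inord j) = (i == j)%:R)
  (MMt : forall i j, (i < 4)%N -> (j < 4)%N -> \sum_(k < 4) M (inord i) k * M (inord j) k = (i == j)%:R)
  (Hcof : forall i j, (i < 4)%N -> (j < 4)%N -> M (inord i) (inord j) = cfx M i j) (Hdet : detx M = 1) :
  Kf M 0 0 * Kf M 1 3 = Kf M 0 3 * Kf M 1 0.
Proof.
have p02 := MMt 0 2 isT isT; rewrite sum4 /= in p02.
have o02 := MtM 0 2 isT isT; rewrite sum4 /= in o02.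
have p13 := MMt 1 3 isT isT; rewrite sum4 /= in p13.
have o13 := MtM 1 3 isT isT; rewrite sum4 /= in o13.
have j2 := jac2 M; rewrite Hdet mul1r -!Hcof // in j2.
have j3 := jac3 M; rewrite Hdet mul1r -!Hcof // in j3.
have j12 := jac12 M; rewrite Hdet mul1r -!Hcof // in j12.
have j17 := jac17 M; rewrite Hdet mul1r -!Hcof // in j17.
clear MtM MMt Hcof Hdet; rewrite /Kf /=; lra.
Qed.
Lemma mn0112 (M : 'M[R]_4) (MtM : forall i j, (i < 4)%N -> (j < 4)%N -> \sum_(k < 4) M k (inord i) * M k (inord j) = (i == j)%:R)
  (MMt : forall i j, (i < 4)%N -> (j < 4)%N -> \sum_(k < 4) M (inord i) k * M (inord j) k = (i == j)%:R)
  (Hcof : forall i j, (i < 4)%N -> (j < 4)%N -> M (inord i) (inord j) = cfx M i j) (Hdet : detx M = 1) :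
  Kf M 0 1 * Kf M 1 2 = Kf M 0 2 * Kf M 1 1.
Proof.
have p02 := MMt 0 2 isT isT; rewrite sum4 /= in p02.
have o02 := MtM 0 2 isT isT; rewrite sum4 /= in o02.
have p13 := MMt 1 3 isT isT; rewrite sum4 /= in p13.
have o13 := MtM 1 3 isT isT; rewrite sum4 /= in o13.
have j2 := jac2 M; rewrite Hdet mul1r -!Hcof // in j2.
have j3 := jac3 M; rewrite Hdet mul1r -!Hcof // in j3.
have j12 := jac12 M; rewrite Hdet mul1r -!Hcof // in j12.
have j17 := jac17 M; rewrite Hdet mul1r -!Hcof // in j17.
clear MtM MMt Hcof Hdet; rewrite /Kf /=; lra.
Qed.
Lemma mn0113 (M : 'M[R]_4) (MtM : forall i j, (i < 4)%N -> (j < 4)%N -> \sum_(k < 4) M k (inord i) * M k (inord j) = (i == j)%:R)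
  (MMt : forall i j, (i < 4)%N -> (j < 4)%N -> \sum_(k < 4) M (inord i) k * M (inord j) k = (i == j)%:R)
  (Hcof : forall i j, (i < 4)%N -> (j < 4)%N -> M (inord i) (inord j) = cfx M i j) (Hdet : detx M = 1) :
  Kf M 0 1 * Kf M 1 3 = Kf M 0 3 * Kf M 1 1.
Proof.
have p03 := MMt 0 3 isT isT; rewrite sum4 /= in p03.
have o03 := MtM 0 3 isT isT; rewrite sum4 /= in o03.
have p12 := MMt 1 2 isT isT; rewrite sum4 /= in p12.
have o12 := MtM 1 2 isT isT; rewrite sum4 /= in o12.
have j1 := jac1 M; rewrite Hdet mul1r -!Hcof // in j1.
have j4 := jac4 M; rewrite Hdet mul1r -!Hcof // in j4.
have j6 := jac6 M; rewrite Hdet mul1r -!Hcof // in j6.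
have j11 := jac11 M; rewrite Hdet mul1r -!Hcof // in j11.
clear MtM MMt Hcof Hdet; rewrite /Kf /=; lra.
Qed.
Lemma mn0123 (M : 'M[R]_4) (MtM : forall i j, (i < 4)%N -> (j < 4)%N -> \sum_(k < 4) M k (inord i) * M k (inord j) = (i == j)%:R)
  (MMt : forall i j, (i < 4)%N -> (j < 4)%N -> \sum_(k < 4) M (inord i) k * M (inord j) k = (i == j)%:R)
  (Hcof : forall i j, (i < 4)%N -> (j < 4)%N -> M (inord i) (inord j) = cfx M i j) (Hdet : detx M = 1) :
  Kf M 0 2 * Kf M 1 3 = Kf M 0 3 * Kf M 1 2.
Proof.
have p00 := MMt 0 0 isT isT; rewrite sum4 /= in p00.
have o00 := MtM 0 0 isT isT; rewrite sum4 /= in o00.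
have p11 := MMt 1 1 isT isT; rewrite sum4 /= in p11.
have o11 := MtM 1 1 isT isT; rewrite sum4 /= in o11.
have j5 := jac5 M; rewrite Hdet mul1r -!Hcof // in j5.
clear MtM MMt Hcof Hdet; rewrite /Kf /=; lra.
Qed.
Lemma mn0201 (M : 'M[R]_4) (MtM : forall i j, (i < 4)%N -> (j < 4)%N -> \sum_(k < 4) M k (inord i) * M k (inord j) = (i == j)%:R)
  (MMt : forall i j, (i < 4)%N -> (j < 4)%N -> \sum_(k < 4) M (inord i) k * M (inord j) k = (i == j)%:R)
  (Hcof : forall i j, (i < 4)%N -> (j < 4)%N -> M (inord i) (inord j) = cfx M i j) (Hdet : detx M = 1) :
  Kf M 0 0 * Kf M 2 1 = Kf M 0 1 * Kf M 2 0.
Proof.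
have p03 := MMt 0 3 isT isT; rewrite sum4 /= in p03.
have o03 := MtM 0 3 isT isT; rewrite sum4 /= in o03.
have p12 := MMt 1 2 isT isT; rewrite sum4 /= in p12.
have o12 := MtM 1 2 isT isT; rewrite sum4 /= in o12.
have j1 := jac1 M; rewrite Hdet mul1r -!Hcof // in j1.
have j4 := jac4 M; rewrite Hdet mul1r -!Hcof // in j4.
have j6 := jac6 M; rewrite Hdet mul1r -!Hcof // in j6.
have j11 := jac11 M; rewrite Hdet mul1r -!Hcof // in j11.
clear MtM MMt Hcof Hdet; rewrite /Kf /=; lra.
Qed.
Lemma mn0202 (M : 'M[R]_4) (MtM : forall i j, (i < 4)%N -> (j < 4)%N -> \sum_(k < 4) M k (inord i) * M k (inord j) = (i == j)%:R)
  (MMt : forall i j, (i < 4)%N -> (j < 4)%N -> \sum_(k < 4) M (inord i) k * M (inord j) k = (i == j)%:R)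
  (Hcof : forall i j, (i < 4)%N -> (j < 4)%N -> M (inord i) (inord j) = cfx M i j) (Hdet : detx M = 1) :
  Kf M 0 0 * Kf M 2 2 = Kf M 0 2 * Kf M 2 0.
Proof.
have o00 := MtM 0 0 isT isT; rewrite sum4 /= in o00.
have p11 := MMt 1 1 isT isT; rewrite sum4 /= in p11.
have o22 := MtM 2 2 isT isT; rewrite sum4 /= in o22.
have p33 := MMt 3 3 isT isT; rewrite sum4 /= in p33.
have j7 := jac7 M; rewrite Hdet mul1r -!Hcof // in j7.
clear MtM MMt Hcof Hdet; rewrite /Kf /=; lra.
Qed.
Lemma mn0203 (M : 'M[R]_4) (MtM : forall i j, (i < 4)%N -> (j < 4)%N -> \sum_(k < 4) M k (inord i) * M k (inord j) = (i == j)%:R)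
  (MMt : forall i j, (i < 4)%N -> (j < 4)%N -> \sum_(k < 4) M (inord i) k * M (inord j) k = (i == j)%:R)
  (Hcof : forall i j, (i < 4)%N -> (j < 4)%N -> M (inord i) (inord j) = cfx M i j) (Hdet : detx M = 1) :
  Kf M 0 0 * Kf M 2 3 = Kf M 0 3 * Kf M 2 0.
Proof.
have p01 := MMt 0 1 isT isT; rewrite sum4 /= in p01.
have o01 := MtM 0 1 isT isT; rewrite sum4 /= in o01.
have p23 := MMt 2 3 isT isT; rewrite sum4 /= in p23.
have o23 := MtM 2 3 isT isT; rewrite sum4 /= in o23.
have j8 := jac8 M; rewrite Hdet mul1r -!Hcof // in j8.
have j9 := jac9 M; rewrite Hdet mul1r -!Hcof // in j9.
have j13 := jac13 M; rewrite Hdet mul1r -!Hcof // in j13.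
have j16 := jac16 M; rewrite Hdet mul1r -!Hcof // in j16.
clear MtM MMt Hcof Hdet; rewrite /Kf /=; lra.
Qed.
Lemma mn0212 (M : 'M[R]_4) (MtM : forall i j, (i < 4)%N -> (j < 4)%N -> \sum_(k < 4) M k (inord i) * M k (inord j) = (i == j)%:R)
  (MMt : forall i j, (i < 4)%N -> (j < 4)%N -> \sum_(k < 4) M (inord i) k * M (inord j) k = (i == j)%:R)
  (Hcof : forall i j, (i < 4)%N -> (j < 4)%N -> M (inord i) (inord j) = cfx M i j) (Hdet : detx M = 1) :
  Kf M 0 1 * Kf M 2 2 = Kf M 0 2 * Kf M 2 1.
Proof.
have p01 := MMt 0 1 isT isT; rewrite sum4 /= in p01.
have o01 := MtM 0 1 isT isT; rewrite sum4 /= in o01.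
have p23 := MMt 2 3 isT isT; rewrite sum4 /= in p23.
have o23 := MtM 2 3 isT isT; rewrite sum4 /= in o23.
have j8 := jac8 M; rewrite Hdet mul1r -!Hcof // in j8.
have j9 := jac9 M; rewrite Hdet mul1r -!Hcof // in j9.
have j13 := jac13 M; rewrite Hdet mul1r -!Hcof // in j13.
have j16 := jac16 M; rewrite Hdet mul1r -!Hcof // in j16.
clear MtM MMt Hcof Hdet; rewrite /Kf /=; lra.
Qed.
Lemma mn0213 (M : 'M[R]_4) (MtM : forall i j, (i < 4)%N -> (j < 4)%N -> \sum_(k < 4) M k (inord i) * M k (inord j) = (i == j)%:R)
  (MMt : forall i j, (i < 4)%N -> (j < 4)%N -> \sum_(k < 4) M (inord i) k * M (inord j) k = (i == j)%:R)
  (Hcof : forall i j, (i < 4)%N -> (j < 4)%N -> M (inord i) (inord j) = cfx M i j) (Hdet : detx M = 1) :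
  Kf M 0 1 * Kf M 2 3 = Kf M 0 3 * Kf M 2 1.
Proof.
have p00 := MMt 0 0 isT isT; rewrite sum4 /= in p00.
have o00 := MtM 0 0 isT isT; rewrite sum4 /= in o00.
have p22 := MMt 2 2 isT isT; rewrite sum4 /= in p22.
have o22 := MtM 2 2 isT isT; rewrite sum4 /= in o22.
have j10 := jac10 M; rewrite Hdet mul1r -!Hcof // in j10.
clear MtM MMt Hcof Hdet; rewrite /Kf /=; lra.
Qed.
Lemma mn0223 (M : 'M[R]_4) (MtM : forall i j, (i < 4)%N -> (j < 4)%N -> \sum_(k < 4) M k (inord i) * M k (inord j) = (i == j)%:R)
  (MMt : forall i j, (i < 4)%N -> (j < 4)%N -> \sum_(k < 4) M (inord i) k * M (inord j) k = (i == j)%:R)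
  (Hcof : forall i j, (i < 4)%N -> (j < 4)%N -> M (inord i) (inord j) = cfx M i j) (Hdet : detx M = 1) :
  Kf M 0 2 * Kf M 2 3 = Kf M 0 3 * Kf M 2 2.
Proof.
have p03 := MMt 0 3 isT isT; rewrite sum4 /= in p03.
have o03 := MtM 0 3 isT isT; rewrite sum4 /= in o03.
have p12 := MMt 1 2 isT isT; rewrite sum4 /= in p12.
have o12 := MtM 1 2 isT isT; rewrite sum4 /= in o12.
have j1 := jac1 M; rewrite Hdet mul1r -!Hcof // in j1.
have j4 := jac4 M; rewrite Hdet mul1r -!Hcof // in j4.
have j6 := jac6 M; rewrite Hdet mul1r -!Hcof // in j6.
have j11 := jac11 M; rewrite Hdet mul1r -!Hcof // in j11.
clear MtM MMt Hcof Hdet; rewrite /Kf /=; lra.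
Qed.
Lemma mn0301 (M : 'M[R]_4) (MtM : forall i j, (i < 4)%N -> (j < 4)%N -> \sum_(k < 4) M k (inord i) * M k (inord j) = (i == j)%:R)
  (MMt : forall i j, (i < 4)%N -> (j < 4)%N -> \sum_(k < 4) M (inord i) k * M (inord j) k = (i == j)%:R)
  (Hcof : forall i j, (i < 4)%N -> (j < 4)%N -> M (inord i) (inord j) = cfx M i j) (Hdet : detx M = 1) :
  Kf M 0 0 * Kf M 3 1 = Kf M 0 1 * Kf M 3 0.
Proof.
have p02 := MMt 0 2 isT isT; rewrite sum4 /= in p02.
have o02 := MtM 0 2 isT isT; rewrite sum4 /= in o02.
have p13 := MMt 1 3 isT isT; rewrite sum4 /= in p13.
have o13 := MtM 1 3 isT isT; rewrite sum4 /= in o13.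
have j2 := jac2 M; rewrite Hdet mul1r -!Hcof // in j2.
have j3 := jac3 M; rewrite Hdet mul1r -!Hcof // in j3.
have j12 := jac12 M; rewrite Hdet mul1r -!Hcof // in j12.
have j17 := jac17 M; rewrite Hdet mul1r -!Hcof // in j17.
clear MtM MMt Hcof Hdet; rewrite /Kf /=; lra.
Qed.
Lemma mn0302 (M : 'M[R]_4) (MtM : forall i j, (i < 4)%N -> (j < 4)%N -> \sum_(k < 4) M k (inord i) * M k (inord j) = (i == j)%:R)
  (MMt : forall i j, (i < 4)%N -> (j < 4)%N -> \sum_(k < 4) M (inord i) k * M (inord j) k = (i == j)%:R)
  (Hcof : forall i j, (i < 4)%N -> (j < 4)%N -> M (inord i) (inord j) = cfx M i j) (Hdet : detx M = 1) :
  Kf M 0 0 * Kf M 3 2 = Kf M 0 2 * Kf M 3 0.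
Proof.
have p01 := MMt 0 1 isT isT; rewrite sum4 /= in p01.
have o01 := MtM 0 1 isT isT; rewrite sum4 /= in o01.
have p23 := MMt 2 3 isT isT; rewrite sum4 /= in p23.
have o23 := MtM 2 3 isT isT; rewrite sum4 /= in o23.
have j8 := jac8 M; rewrite Hdet mul1r -!Hcof // in j8.
have j9 := jac9 M; rewrite Hdet mul1r -!Hcof // in j9.
have j13 := jac13 M; rewrite Hdet mul1r -!Hcof // in j13.
have j16 := jac16 M; rewrite Hdet mul1r -!Hcof // in j16.
clear MtM MMt Hcof Hdet; rewrite /Kf /=; lra.
Qed.
Lemma mn0303 (M : 'M[R]_4) (MtM : forall i j, (i < 4)%N -> (j < 4)%N -> \sum_(k < 4) M k (inord i) * M k (inord j) = (i == j)%:R)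
  (MMt : forall i j, (i < 4)%N -> (j < 4)%N -> \sum_(k < 4) M (inord i) k * M (inord j) k = (i == j)%:R)
  (Hcof : forall i j, (i < 4)%N -> (j < 4)%N -> M (inord i) (inord j) = cfx M i j) (Hdet : detx M = 1) :
  Kf M 0 0 * Kf M 3 3 = Kf M 0 3 * Kf M 3 0.
Proof.
have p00 := MMt 0 0 isT isT; rewrite sum4 /= in p00.
have o11 := MtM 1 1 isT isT; rewrite sum4 /= in o11.
have o22 := MtM 2 2 isT isT; rewrite sum4 /= in o22.
have p33 := MMt 3 3 isT isT; rewrite sum4 /= in p33.
have j14 := jac14 M; rewrite Hdet mul1r -!Hcof // in j14.
clear MtM MMt Hcof Hdet; rewrite /Kf /=; lra.
Qed.
Lemma mn0312 (M : 'M[R]_4) (MtM : forall i j, (i < 4)%N -> (j < 4)%N -> \sum_(k < 4) M k (inord i) * M k (inord j) = (i == j)%:R)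
  (MMt : forall i j, (i < 4)%N -> (j < 4)%N -> \sum_(k < 4) M (inord i) k * M (inord j) k = (i == j)%:R)
  (Hcof : forall i j, (i < 4)%N -> (j < 4)%N -> M (inord i) (inord j) = cfx M i j) (Hdet : detx M = 1) :
  Kf M 0 1 * Kf M 3 2 = Kf M 0 2 * Kf M 3 1.
Proof.
have p11 := MMt 1 1 isT isT; rewrite sum4 /= in p11.
have o11 := MtM 1 1 isT isT; rewrite sum4 /= in o11.
have p22 := MMt 2 2 isT isT; rewrite sum4 /= in p22.
have o22 := MtM 2 2 isT isT; rewrite sum4 /= in o22.
have j15 := jac15 M; rewrite Hdet mul1r -!Hcof // in j15.
clear MtM MMt Hcof Hdet; rewrite /Kf /=; lra.
Qed.
Lemma mn0313 (M : 'M[R]_4) (MtM : forall i j, (i < 4)%N -> (j < 4)%N -> \sum_(k < 4) M k (inord i) * M k (inord j) = (i == j)%:R)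
  (MMt : forall i j, (i < 4)%N -> (j < 4)%N -> \sum_(k < 4) M (inord i) k * M (inord j) k = (i == j)%:R)
  (Hcof : forall i j, (i < 4)%N -> (j < 4)%N -> M (inord i) (inord j) = cfx M i j) (Hdet : detx M = 1) :
  Kf M 0 1 * Kf M 3 3 = Kf M 0 3 * Kf M 3 1.
Proof.
have p01 := MMt 0 1 isT isT; rewrite sum4 /= in p01.
have o01 := MtM 0 1 isT isT; rewrite sum4 /= in o01.
have p23 := MMt 2 3 isT isT; rewrite sum4 /= in p23.
have o23 := MtM 2 3 isT isT; rewrite sum4 /= in o23.
have j8 := jac8 M; rewrite Hdet mul1r -!Hcof // in j8.
have j9 := jac9 M; rewrite Hdet mul1r -!Hcof // in j9.
have j13 := jac13 M; rewrite Hdet mul1r -!Hcof // in j13.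
have j16 := jac16 M; rewrite Hdet mul1r -!Hcof // in j16.
clear MtM MMt Hcof Hdet; rewrite /Kf /=; lra.
Qed.
Lemma mn0323 (M : 'M[R]_4) (MtM : forall i j, (i < 4)%N -> (j < 4)%N -> \sum_(k < 4) M k (inord i) * M k (inord j) = (i == j)%:R)
  (MMt : forall i j, (i < 4)%N -> (j < 4)%N -> \sum_(k < 4) M (inord i) k * M (inord j) k = (i == j)%:R)
  (Hcof : forall i j, (i < 4)%N -> (j < 4)%N -> M (inord i) (inord j) = cfx M i j) (Hdet : detx M = 1) :
  Kf M 0 2 * Kf M 3 3 = Kf M 0 3 * Kf M 3 2.
Proof.
have p02 := MMt 0 2 isT isT; rewrite sum4 /= in p02.
have o02 := MtM 0 2 isT isT; rewrite sum4 /= in o02.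
have p13 := MMt 1 3 isT isT; rewrite sum4 /= in p13.
have o13 := MtM 1 3 isT isT; rewrite sum4 /= in o13.
have j2 := jac2 M; rewrite Hdet mul1r -!Hcof // in j2.
have j3 := jac3 M; rewrite Hdet mul1r -!Hcof // in j3.
have j12 := jac12 M; rewrite Hdet mul1r -!Hcof // in j12.
have j17 := jac17 M; rewrite Hdet mul1r -!Hcof // in j17.
clear MtM MMt Hcof Hdet; rewrite /Kf /=; lra.
Qed.
Lemma mn1201 (M : 'M[R]_4) (MtM : forall i j, (i < 4)%N -> (j < 4)%N -> \sum_(k < 4) M k (inord i) * M k (inord j) = (i == j)%:R)
  (MMt : forall i j, (i < 4)%N -> (j < 4)%N -> \sum_(k < 4) M (inord i) k * M (inord j) k = (i == j)%:R)
  (Hcof : forall i j, (i < 4)%N -> (j < 4)%N -> M (inord i) (inord j) = cfx M i j) (Hdet : detx M = 1) :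
  Kf M 1 0 * Kf M 2 1 = Kf M 1 1 * Kf M 2 0.
Proof.
have p02 := MMt 0 2 isT isT; rewrite sum4 /= in p02.
have o02 := MtM 0 2 isT isT; rewrite sum4 /= in o02.
have p13 := MMt 1 3 isT isT; rewrite sum4 /= in p13.
have o13 := MtM 1 3 isT isT; rewrite sum4 /= in o13.
have j2 := jac2 M; rewrite Hdet mul1r -!Hcof // in j2.
have j3 := jac3 M; rewrite Hdet mul1r -!Hcof // in j3.
have j12 := jac12 M; rewrite Hdet mul1r -!Hcof // in j12.
have j17 := jac17 M; rewrite Hdet mul1r -!Hcof // in j17.
clear MtM MMt Hcof Hdet; rewrite /Kf /=; lra.
Qed.
Lemma mn1202 (M : 'M[R]_4) (MtM : forall i j, (i < 4)%N -> (j < 4)%N -> \sum_(k < 4) M k (inord i) * M k (inord j) = (i == j)%:R)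
  (MMt : forall i j, (i < 4)%N -> (j < 4)%N -> \sum_(k < 4) M (inord i) k * M (inord j) k = (i == j)%:R)
  (Hcof : forall i j, (i < 4)%N -> (j < 4)%N -> M (inord i) (inord j) = cfx M i j) (Hdet : detx M = 1) :
  Kf M 1 0 * Kf M 2 2 = Kf M 1 2 * Kf M 2 0.
Proof.
have p01 := MMt 0 1 isT isT; rewrite sum4 /= in p01.
have o01 := MtM 0 1 isT isT; rewrite sum4 /= in o01.
have p23 := MMt 2 3 isT isT; rewrite sum4 /= in p23.
have o23 := MtM 2 3 isT isT; rewrite sum4 /= in o23.
have j8 := jac8 M; rewrite Hdet mul1r -!Hcof // in j8.
have j9 := jac9 M; rewrite Hdet mul1r -!Hcof // in j9.
have j13 := jac13 M; rewrite Hdet mul1r -!Hcof // in j13.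
have j16 := jac16 M; rewrite Hdet mul1r -!Hcof // in j16.
clear MtM MMt Hcof Hdet; rewrite /Kf /=; lra.
Qed.
Lemma mn1203 (M : 'M[R]_4) (MtM : forall i j, (i < 4)%N -> (j < 4)%N -> \sum_(k < 4) M k (inord i) * M k (inord j) = (i == j)%:R)
  (MMt : forall i j, (i < 4)%N -> (j < 4)%N -> \sum_(k < 4) M (inord i) k * M (inord j) k = (i == j)%:R)
  (Hcof : forall i j, (i < 4)%N -> (j < 4)%N -> M (inord i) (inord j) = cfx M i j) (Hdet : detx M = 1) :
  Kf M 1 0 * Kf M 2 3 = Kf M 1 3 * Kf M 2 0.
Proof.
have p11 := MMt 1 1 isT isT; rewrite sum4 /= in p11.
have o11 := MtM 1 1 isT isT; rewrite sum4 /= in o11.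
have p22 := MMt 2 2 isT isT; rewrite sum4 /= in p22.
have o22 := MtM 2 2 isT isT; rewrite sum4 /= in o22.
have j15 := jac15 M; rewrite Hdet mul1r -!Hcof // in j15.
clear MtM MMt Hcof Hdet; rewrite /Kf /=; lra.
Qed.
Lemma mn1212 (M : 'M[R]_4) (MtM : forall i j, (i < 4)%N -> (j < 4)%N -> \sum_(k < 4) M k (inord i) * M k (inord j) = (i == j)%:R)
  (MMt : forall i j, (i < 4)%N -> (j < 4)%N -> \sum_(k < 4) M (inord i) k * M (inord j) k = (i == j)%:R)
  (Hcof : forall i j, (i < 4)%N -> (j < 4)%N -> M (inord i) (inord j) = cfx M i j) (Hdet : detx M = 1) :
  Kf M 1 1 * Kf M 2 2 = Kf M 1 2 * Kf M 2 1.
Proof.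
have p00 := MMt 0 0 isT isT; rewrite sum4 /= in p00.
have o11 := MtM 1 1 isT isT; rewrite sum4 /= in o11.
have o22 := MtM 2 2 isT isT; rewrite sum4 /= in o22.
have p33 := MMt 3 3 isT isT; rewrite sum4 /= in p33.
have j14 := jac14 M; rewrite Hdet mul1r -!Hcof // in j14.
clear MtM MMt Hcof Hdet; rewrite /Kf /=; lra.
Qed.
Lemma mn1213 (M : 'M[R]_4) (MtM : forall i j, (i < 4)%N -> (j < 4)%N -> \sum_(k < 4) M k (inord i) * M k (inord j) = (i == j)%:R)
  (MMt : forall i j, (i < 4)%N -> (j < 4)%N -> \sum_(k < 4) M (inord i) k * M (inord j) k = (i == j)%:R)
  (Hcof : forall i j, (i < 4)%N -> (j < 4)%N -> M (inord i) (inord j) = cfx M i j) (Hdet : detx M = 1) :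
  Kf M 1 1 * Kf M 2 3 = Kf M 1 3 * Kf M 2 1.
Proof.
have p01 := MMt 0 1 isT isT; rewrite sum4 /= in p01.
have o01 := MtM 0 1 isT isT; rewrite sum4 /= in o01.
have p23 := MMt 2 3 isT isT; rewrite sum4 /= in p23.
have o23 := MtM 2 3 isT isT; rewrite sum4 /= in o23.
have j8 := jac8 M; rewrite Hdet mul1r -!Hcof // in j8.
have j9 := jac9 M; rewrite Hdet mul1r -!Hcof // in j9.
have j13 := jac13 M; rewrite Hdet mul1r -!Hcof // in j13.
have j16 := jac16 M; rewrite Hdet mul1r -!Hcof // in j16.
clear MtM MMt Hcof Hdet; rewrite /Kf /=; lra.
Qed.
Lemma mn1223 (M : 'M[R]_4) (MtM : forall i j, (i < 4)%N -> (j < 4)%N -> \sum_(k < 4) M k (inord i) * M k (inord j) = (i == j)%:R)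
  (MMt : forall i j, (i < 4)%N -> (j < 4)%N -> \sum_(k < 4) M (inord i) k * M (inord j) k = (i == j)%:R)
  (Hcof : forall i j, (i < 4)%N -> (j < 4)%N -> M (inord i) (inord j) = cfx M i j) (Hdet : detx M = 1) :
  Kf M 1 2 * Kf M 2 3 = Kf M 1 3 * Kf M 2 2.
Proof.
have p02 := MMt 0 2 isT isT; rewrite sum4 /= in p02.
have o02 := MtM 0 2 isT isT; rewrite sum4 /= in o02.
have p13 := MMt 1 3 isT isT; rewrite sum4 /= in p13.
have o13 := MtM 1 3 isT isT; rewrite sum4 /= in o13.
have j2 := jac2 M; rewrite Hdet mul1r -!Hcof // in j2.
have j3 := jac3 M; rewrite Hdet mul1r -!Hcof // in j3.
have j12 := jac12 M; rewrite Hdet mul1r -!Hcof // in j12.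
have j17 := jac17 M; rewrite Hdet mul1r -!Hcof // in j17.
clear MtM MMt Hcof Hdet; rewrite /Kf /=; lra.
Qed.
Lemma mn1301 (M : 'M[R]_4) (MtM : forall i j, (i < 4)%N -> (j < 4)%N -> \sum_(k < 4) M k (inord i) * M k (inord j) = (i == j)%:R)
  (MMt : forall i j, (i < 4)%N -> (j < 4)%N -> \sum_(k < 4) M (inord i) k * M (inord j) k = (i == j)%:R)
  (Hcof : forall i j, (i < 4)%N -> (j < 4)%N -> M (inord i) (inord j) = cfx M i j) (Hdet : detx M = 1) :
  Kf M 1 0 * Kf M 3 1 = Kf M 1 1 * Kf M 3 0.
Proof.
have p03 := MMt 0 3 isT isT; rewrite sum4 /= in p03.
have o03 := MtM 0 3 isT isT; rewrite sum4 /= in o03.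
have p12 := MMt 1 2 isT isT; rewrite sum4 /= in p12.
have o12 := MtM 1 2 isT isT; rewrite sum4 /= in o12.
have j1 := jac1 M; rewrite Hdet mul1r -!Hcof // in j1.
have j4 := jac4 M; rewrite Hdet mul1r -!Hcof // in j4.
have j6 := jac6 M; rewrite Hdet mul1r -!Hcof // in j6.
have j11 := jac11 M; rewrite Hdet mul1r -!Hcof // in j11.
clear MtM MMt Hcof Hdet; rewrite /Kf /=; lra.
Qed.
Lemma mn1302 (M : 'M[R]_4) (MtM : forall i j, (i < 4)%N -> (j < 4)%N -> \sum_(k < 4) M k (inord i) * M k (inord j) = (i == j)%:R)
  (MMt : forall i j, (i < 4)%N -> (j < 4)%N -> \sum_(k < 4) M (inord i) k * M (inord j) k = (i == j)%:R)
  (Hcof : forall i j, (i < 4)%N -> (j < 4)%N -> M (inord i) (inord j) = cfx M i j) (Hdet : detx M = 1) :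
  Kf M 1 0 * Kf M 3 2 = Kf M 1 2 * Kf M 3 0.
Proof.
have p00 := MMt 0 0 isT isT; rewrite sum4 /= in p00.
have o00 := MtM 0 0 isT isT; rewrite sum4 /= in o00.
have p22 := MMt 2 2 isT isT; rewrite sum4 /= in p22.
have o22 := MtM 2 2 isT isT; rewrite sum4 /= in o22.
have j10 := jac10 M; rewrite Hdet mul1r -!Hcof // in j10.
clear MtM MMt Hcof Hdet; rewrite /Kf /=; lra.
Qed.
Lemma mn1303 (M : 'M[R]_4) (MtM : forall i j, (i < 4)%N -> (j < 4)%N -> \sum_(k < 4) M k (inord i) * M k (inord j) = (i == j)%:R)
  (MMt : forall i j, (i < 4)%N -> (j < 4)%N -> \sum_(k < 4) M (inord i) k * M (inord j) k = (i == j)%:R)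
  (Hcof : forall i j, (i < 4)%N -> (j < 4)%N -> M (inord i) (inord j) = cfx M i j) (Hdet : detx M = 1) :
  Kf M 1 0 * Kf M 3 3 = Kf M 1 3 * Kf M 3 0.
Proof.
have p01 := MMt 0 1 isT isT; rewrite sum4 /= in p01.
have o01 := MtM 0 1 isT isT; rewrite sum4 /= in o01.
have p23 := MMt 2 3 isT isT; rewrite sum4 /= in p23.
have o23 := MtM 2 3 isT isT; rewrite sum4 /= in o23.
have j8 := jac8 M; rewrite Hdet mul1r -!Hcof // in j8.
have j9 := jac9 M; rewrite Hdet mul1r -!Hcof // in j9.
have j13 := jac13 M; rewrite Hdet mul1r -!Hcof // in j13.
have j16 := jac16 M; rewrite Hdet mul1r -!Hcof // in j16.
clear MtM MMt Hcof Hdet; rewrite /Kf /=; lra.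
Qed.
Lemma mn1312 (M : 'M[R]_4) (MtM : forall i j, (i < 4)%N -> (j < 4)%N -> \sum_(k < 4) M k (inord i) * M k (inord j) = (i == j)%:R)
  (MMt : forall i j, (i < 4)%N -> (j < 4)%N -> \sum_(k < 4) M (inord i) k * M (inord j) k = (i == j)%:R)
  (Hcof : forall i j, (i < 4)%N -> (j < 4)%N -> M (inord i) (inord j) = cfx M i j) (Hdet : detx M = 1) :
  Kf M 1 1 * Kf M 3 2 = Kf M 1 2 * Kf M 3 1.
Proof.
have p01 := MMt 0 1 isT isT; rewrite sum4 /= in p01.
have o01 := MtM 0 1 isT isT; rewrite sum4 /= in o01.
have p23 := MMt 2 3 isT isT; rewrite sum4 /= in p23.
have o23 := MtM 2 3 isT isT; rewrite sum4 /= in o23.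
have j8 := jac8 M; rewrite Hdet mul1r -!Hcof // in j8.
have j9 := jac9 M; rewrite Hdet mul1r -!Hcof // in j9.
have j13 := jac13 M; rewrite Hdet mul1r -!Hcof // in j13.
have j16 := jac16 M; rewrite Hdet mul1r -!Hcof // in j16.
clear MtM MMt Hcof Hdet; rewrite /Kf /=; lra.
Qed.
Lemma mn1313 (M : 'M[R]_4) (MtM : forall i j, (i < 4)%N -> (j < 4)%N -> \sum_(k < 4) M k (inord i) * M k (inord j) = (i == j)%:R)
  (MMt : forall i j, (i < 4)%N -> (j < 4)%N -> \sum_(k < 4) M (inord i) k * M (inord j) k = (i == j)%:R)
  (Hcof : forall i j, (i < 4)%N -> (j < 4)%N -> M (inord i) (inord j) = cfx M i j) (Hdet : detx M = 1) :
  Kf M 1 1 * Kf M 3 3 = Kf M 1 3 * Kf M 3 1.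
Proof.
have o00 := MtM 0 0 isT isT; rewrite sum4 /= in o00.
have p11 := MMt 1 1 isT isT; rewrite sum4 /= in p11.
have o22 := MtM 2 2 isT isT; rewrite sum4 /= in o22.
have p33 := MMt 3 3 isT isT; rewrite sum4 /= in p33.
have j7 := jac7 M; rewrite Hdet mul1r -!Hcof // in j7.
clear MtM MMt Hcof Hdet; rewrite /Kf /=; lra.
Qed.
Lemma mn1323 (M : 'M[R]_4) (MtM : forall i j, (i < 4)%N -> (j < 4)%N -> \sum_(k < 4) M k (inord i) * M k (inord j) = (i == j)%:R)
  (MMt : forall i j, (i < 4)%N -> (j < 4)%N -> \sum_(k < 4) M (inord i) k * M (inord j) k = (i == j)%:R)
  (Hcof : forall i j, (i < 4)%N -> (j < 4)%N -> M (inord i) (inord j) = cfx M i j) (Hdet : detx M = 1) :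
  Kf M 1 2 * Kf M 3 3 = Kf M 1 3 * Kf M 3 2.
Proof.
have p03 := MMt 0 3 isT isT; rewrite sum4 /= in p03.
have o03 := MtM 0 3 isT isT; rewrite sum4 /= in o03.
have p12 := MMt 1 2 isT isT; rewrite sum4 /= in p12.
have o12 := MtM 1 2 isT isT; rewrite sum4 /= in o12.
have j1 := jac1 M; rewrite Hdet mul1r -!Hcof // in j1.
have j4 := jac4 M; rewrite Hdet mul1r -!Hcof // in j4.
have j6 := jac6 M; rewrite Hdet mul1r -!Hcof // in j6.
have j11 := jac11 M; rewrite Hdet mul1r -!Hcof // in j11.
clear MtM MMt Hcof Hdet; rewrite /Kf /=; lra.
Qed.
Lemma mn2301 (M : 'M[R]_4) (MtM : forall i j, (i < 4)%N -> (j < 4)%N -> \sum_(k < 4) M k (inord i) * M k (inord j) = (i == j)%:R)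
  (MMt : forall i j, (i < 4)%N -> (j < 4)%N -> \sum_(k < 4) M (inord i) k * M (inord j) k = (i == j)%:R)
  (Hcof : forall i j, (i < 4)%N -> (j < 4)%N -> M (inord i) (inord j) = cfx M i j) (Hdet : detx M = 1) :
  Kf M 2 0 * Kf M 3 1 = Kf M 2 1 * Kf M 3 0.
Proof.
have p00 := MMt 0 0 isT isT; rewrite sum4 /= in p00.
have o00 := MtM 0 0 isT isT; rewrite sum4 /= in o00.
have p11 := MMt 1 1 isT isT; rewrite sum4 /= in p11.
have o11 := MtM 1 1 isT isT; rewrite sum4 /= in o11.
have j5 := jac5 M; rewrite Hdet mul1r -!Hcof // in j5.
clear MtM MMt Hcof Hdet; rewrite /Kf /=; lra.
Qed.
Lemma mn2302 (M : 'M[R]_4) (MtM : forall i j, (i < 4)%N -> (j < 4)%N -> \sum_(k < 4) M k (inord i) * M k (inord j) = (i == j)%:R)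
  (MMt : forall i j, (i < 4)%N -> (j < 4)%N -> \sum_(k < 4) M (inord i) k * M (inord j) k = (i == j)%:R)
  (Hcof : forall i j, (i < 4)%N -> (j < 4)%N -> M (inord i) (inord j) = cfx M i j) (Hdet : detx M = 1) :
  Kf M 2 0 * Kf M 3 2 = Kf M 2 2 * Kf M 3 0.
Proof.
have p03 := MMt 0 3 isT isT; rewrite sum4 /= in p03.
have o03 := MtM 0 3 isT isT; rewrite sum4 /= in o03.
have p12 := MMt 1 2 isT isT; rewrite sum4 /= in p12.
have o12 := MtM 1 2 isT isT; rewrite sum4 /= in o12.
have j1 := jac1 M; rewrite Hdet mul1r -!Hcof // in j1.
have j4 := jac4 M; rewrite Hdet mul1r -!Hcof // in j4.
have j6 := jac6 M; rewrite Hdet mul1r -!Hcof // in j6.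
have j11 := jac11 M; rewrite Hdet mul1r -!Hcof // in j11.
clear MtM MMt Hcof Hdet; rewrite /Kf /=; lra.
Qed.
Lemma mn2303 (M : 'M[R]_4) (MtM : forall i j, (i < 4)%N -> (j < 4)%N -> \sum_(k < 4) M k (inord i) * M k (inord j) = (i == j)%:R)
  (MMt : forall i j, (i < 4)%N -> (j < 4)%N -> \sum_(k < 4) M (inord i) k * M (inord j) k = (i == j)%:R)
  (Hcof : forall i j, (i < 4)%N -> (j < 4)%N -> M (inord i) (inord j) = cfx M i j) (Hdet : detx M = 1) :
  Kf M 2 0 * Kf M 3 3 = Kf M 2 3 * Kf M 3 0.
Proof.
have p02 := MMt 0 2 isT isT; rewrite sum4 /= in p02.
have o02 := MtM 0 2 isT isT; rewrite sum4 /= in o02.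
have p13 := MMt 1 3 isT isT; rewrite sum4 /= in p13.
have o13 := MtM 1 3 isT isT; rewrite sum4 /= in o13.
have j2 := jac2 M; rewrite Hdet mul1r -!Hcof // in j2.
have j3 := jac3 M; rewrite Hdet mul1r -!Hcof // in j3.
have j12 := jac12 M; rewrite Hdet mul1r -!Hcof // in j12.
have j17 := jac17 M; rewrite Hdet mul1r -!Hcof // in j17.
clear MtM MMt Hcof Hdet; rewrite /Kf /=; lra.
Qed.
Lemma mn2312 (M : 'M[R]_4) (MtM : forall i j, (i < 4)%N -> (j < 4)%N -> \sum_(k < 4) M k (inord i) * M k (inord j) = (i == j)%:R)
  (MMt : forall i j, (i < 4)%N -> (j < 4)%N -> \sum_(k < 4) M (inord i) k * M (inord j) k = (i == j)%:R)
  (Hcof : forall i j, (i < 4)%N -> (j < 4)%N -> M (inord i) (inord j) = cfx M i j) (Hdet : detx M = 1) :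
  Kf M 2 1 * Kf M 3 2 = Kf M 2 2 * Kf M 3 1.
Proof.
have p02 := MMt 0 2 isT isT; rewrite sum4 /= in p02.
have o02 := MtM 0 2 isT isT; rewrite sum4 /= in o02.
have p13 := MMt 1 3 isT isT; rewrite sum4 /= in p13.
have o13 := MtM 1 3 isT isT; rewrite sum4 /= in o13.
have j2 := jac2 M; rewrite Hdet mul1r -!Hcof // in j2.
have j3 := jac3 M; rewrite Hdet mul1r -!Hcof // in j3.
have j12 := jac12 M; rewrite Hdet mul1r -!Hcof // in j12.
have j17 := jac17 M; rewrite Hdet mul1r -!Hcof // in j17.
clear MtM MMt Hcof Hdet; rewrite /Kf /=; lra.
Qed.
Lemma mn2313 (M : 'M[R]_4) (MtM : forall i j, (i < 4)%N -> (j < 4)%N -> \sum_(k < 4) M k (inord i) * M k (inord j) = (i == j)%:R)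
  (MMt : forall i j, (i < 4)%N -> (j < 4)%N -> \sum_(k < 4) M (inord i) k * M (inord j) k = (i == j)%:R)
  (Hcof : forall i j, (i < 4)%N -> (j < 4)%N -> M (inord i) (inord j) = cfx M i j) (Hdet : detx M = 1) :
  Kf M 2 1 * Kf M 3 3 = Kf M 2 3 * Kf M 3 1.
Proof.
have p03 := MMt 0 3 isT isT; rewrite sum4 /= in p03.
have o03 := MtM 0 3 isT isT; rewrite sum4 /= in o03.
have p12 := MMt 1 2 isT isT; rewrite sum4 /= in p12.
have o12 := MtM 1 2 isT isT; rewrite sum4 /= in o12.
have j1 := jac1 M; rewrite Hdet mul1r -!Hcof // in j1.
have j4 := jac4 M; rewrite Hdet mul1r -!Hcof // in j4.
have j6 := jac6 M; rewrite Hdet mul1r -!Hcof // in j6.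
have j11 := jac11 M; rewrite Hdet mul1r -!Hcof // in j11.
clear MtM MMt Hcof Hdet; rewrite /Kf /=; lra.
Qed.
Lemma mn2323 (M : 'M[R]_4) (MtM : forall i j, (i < 4)%N -> (j < 4)%N -> \sum_(k < 4) M k (inord i) * M k (inord j) = (i == j)%:R)
  (MMt : forall i j, (i < 4)%N -> (j < 4)%N -> \sum_(k < 4) M (inord i) k * M (inord j) k = (i == j)%:R)
  (Hcof : forall i j, (i < 4)%N -> (j < 4)%N -> M (inord i) (inord j) = cfx M i j) (Hdet : detx M = 1) :
  Kf M 2 2 * Kf M 3 3 = Kf M 2 3 * Kf M 3 2.
Proof.
have o00 := MtM 0 0 isT isT; rewrite sum4 /= in o00.
have o11 := MtM 1 1 isT isT; rewrite sum4 /= in o11.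
have p22 := MMt 2 2 isT isT; rewrite sum4 /= in p22.
have p33 := MMt 3 3 isT isT; rewrite sum4 /= in p33.
have j0 := jac0 M; rewrite Hdet mul1r -!Hcof // in j0.
clear MtM MMt Hcof Hdet; rewrite /Kf /=; lra.
Qed.
Lemma rank1_lt (M : 'M[R]_4) : SO4 R M -> forall k k' l l', (k < k')%N -> (k' < 4)%N -> (l < l')%N -> (l' < 4)%N ->
  Kf M k l * Kf M k' l' = Kf M k l' * Kf M k' l.
Proof.
move=> /so4_scalar [MtM [MMt [Hcof Hdet]]].
have k0101 := mn0101 MtM MMt Hcof Hdet.
have k0102 := mn0102 MtM MMt Hcof Hdet.
have k0103 := mn0103 MtM MMt Hcof Hdet.
have k0112 := mn0112 MtM MMt Hcof Hdet.
have k0113 := mn0113 MtM MMt Hcof Hdet.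
have k0123 := mn0123 MtM MMt Hcof Hdet.
have k0201 := mn0201 MtM MMt Hcof Hdet.
have k0202 := mn0202 MtM MMt Hcof Hdet.
have k0203 := mn0203 MtM MMt Hcof Hdet.
have k0212 := mn0212 MtM MMt Hcof Hdet.
have k0213 := mn0213 MtM MMt Hcof Hdet.
have k0223 := mn0223 MtM MMt Hcof Hdet.
have k0301 := mn0301 MtM MMt Hcof Hdet.
have k0302 := mn0302 MtM MMt Hcof Hdet.
have k0303 := mn0303 MtM MMt Hcof Hdet.
have k0312 := mn0312 MtM MMt Hcof Hdet.
have k0313 := mn0313 MtM MMt Hcof Hdet.
have k0323 := mn0323 MtM MMt Hcof Hdet.
have k1201 := mn1201 MtM MMt Hcof Hdet.
have k1202 := mn1202 MtM MMt Hcof Hdet.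
have k1203 := mn1203 MtM MMt Hcof Hdet.
have k1212 := mn1212 MtM MMt Hcof Hdet.
have k1213 := mn1213 MtM MMt Hcof Hdet.
have k1223 := mn1223 MtM MMt Hcof Hdet.
have k1301 := mn1301 MtM MMt Hcof Hdet.
have k1302 := mn1302 MtM MMt Hcof Hdet.
have k1303 := mn1303 MtM MMt Hcof Hdet.
have k1312 := mn1312 MtM MMt Hcof Hdet.
have k1313 := mn1313 MtM MMt Hcof Hdet.
have k1323 := mn1323 MtM MMt Hcof Hdet.
have k2301 := mn2301 MtM MMt Hcof Hdet.
have k2302 := mn2302 MtM MMt Hcof Hdet.
have k2303 := mn2303 MtM MMt Hcof Hdet.
have k2312 := mn2312 MtM MMt Hcof Hdet.
have k2313 := mn2313 MtM MMt Hcof Hdet.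
have k2323 := mn2323 MtM MMt Hcof Hdet.
move=> k k' l l'.
case: k => [|[|[|[|//]]]]; case: k' => [|[|[|[|//]]]] //;
case: l => [|[|[|[|//]]]]; case: l' => [|[|[|[|//]]]] //.
Qed.
End S.
Section S.
Variable R : realType.
Local Notation q := (@qco R).

Lemma rank1 (M : 'M[R]_4) : SO4 R M -> forall k k' l l', (k < 4)%N -> (k' < 4)%N -> (l < 4)%N -> (l' < 4)%N ->
  Kf M k l * Kf M k' l' = Kf M k l' * Kf M k' l.
Proof.
move=> HM k k' l l' hk hk' hl hl'.
case: (ltngtP k k') => [kk|kk|<-]; last by rewrite mulrC.
- case: (ltngtP l l') => [ll|ll|<-] //; first exact: rank1_lt.
  by have := rank1_lt HM kk hk' ll hl; lra.
- case: (ltngtP l l') => [ll|ll|<-] //.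
    by have := rank1_lt HM kk hk ll hl'; lra.
  by have := rank1_lt HM kk hk ll hl; lra.
Qed.

Definition mkqf (f : nat -> R) := mkq (f 0%N) (f 1%N) (f 2%N) (f 3%N).
Lemma mkqfE f k : (k < 4)%N -> q (mkqf f) k = f k.
Proof. by case: k => [|[|[|[|//]]]] _; rewrite /mkqf ?mkq0 ?mkq1 ?mkq2 ?mkq3. Qed.

Lemma S3f (p : 'rV[R]_4) : S3 R p <-> \sum_(k < 4) q p k ^+ 2 = 1.
Proof. by rewrite S3E sum4 /= !inordK. Qed.

Lemma so4_decomp (M : 'M[R]_4) : SO4 R M -> exists a b, S3 R a /\ S3 R b /\ RQQ a b = M.
Proof.
move=> HM; have R1 := rank1 HM.
have [MtM [MMt _]] := so4_scalar HM.
have o00 := MtM 0%N 0%N isT isT; rewrite sum4 /= in o00.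
have o11 := MtM 1%N 1%N isT isT; rewrite sum4 /= in o11.
have o22 := MtM 2%N 2%N isT isT; rewrite sum4 /= in o22.
have o33 := MtM 3%N 3%N isT isT; rewrite sum4 /= in o33.
pose s l := Kf M 0 l ^+ 2 + Kf M 1 l ^+ 2 + Kf M 2 l ^+ 2 + Kf M 3 l ^+ 2.
have Hs : s 0%N + s 1%N + s 2%N + s 3%N = 1.
  clear R1 MtM MMt; rewrite /s /Kf /=. lra.
have s0 l : 0 <= s l by rewrite /s; apply: addr_ge0; [apply: addr_ge0; [apply: addr_ge0|]|]; exact: sqr_ge0.
have [l [hl sl]] : exists l, (l < 4)%N /\ 0 < s l.
  case: (ltrP 0 (s 0%N)) => h0; first by exists 0%N.
  case: (ltrP 0 (s 1%N)) => h1; first by exists 1%N.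
  case: (ltrP 0 (s 2%N)) => h2; first by exists 2%N.
  case: (ltrP 0 (s 3%N)) => h3; first by exists 3%N.
  have := s0 0%N; have := s0 1%N; have := s0 2%N; have := s0 3%N; lra.
set r := Num.sqrt (s l).
have r0 : 0 < r by rewrite sqrtr_gt0.
have rr : r * r = s l by rewrite -expr2 sqr_sqrtr // ltW.
pose a := mkqf (fun k => Kf M k l / r).
pose b := mkqf (fun m => (Kf M 0 l * Kf M 0 m + Kf M 1 l * Kf M 1 m + Kf M 2 l * Kf M 2 m + Kf M 3 l * Kf M 3 m) / r).
have ab k m : (k < 4)%N -> (m < 4)%N -> q a k * q b m = Kf M k m.
  move=> hk hm; rewrite !mkqfE //.
  have E : Kf M k l * (Kf M 0 l * Kf M 0 m + Kf M 1 l * Kf M 1 m + Kf M 2 l * Kf M 2 m + Kf M 3 l * Kf M 3 m)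
        = Kf M k m * s l.
    have e0 := R1 k 0%N l m hk isT hl hm; have e1 := R1 k 1%N l m hk isT hl hm.
    have e2 := R1 k 2%N l m hk isT hl hm; have e3 := R1 k 3%N l m hk isT hl hm.
    rewrite /s !mulrDr; rewrite !(mulrCA (Kf M k l)) e0 e1 e2 e3 /=; ring.
  by rewrite mulf_div E rr mulfK // gt_eqF.
exists a, b; split; [|split].
- have r2 : r ^+ 2 = s l by rewrite expr2.
  rewrite S3E !mkqfE // !expr_div_n -!mulrDl r2; exact: divff (lt0r_neq0 sl).
- have Sa : q a 0 ^+ 2 + q a 1 ^+ 2 + q a 2 ^+ 2 + q a 3 ^+ 2 = 1.
    have r2 : r ^+ 2 = s l by rewrite expr2.
    rewrite !mkqfE // !expr_div_n -!mulrDl r2; exact: divff (lt0r_neq0 sl).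
  apply/S3E.
  have E : (q a 0 ^+ 2 + q a 1 ^+ 2 + q a 2 ^+ 2 + q a 3 ^+ 2) * (q b 0 ^+ 2 + q b 1 ^+ 2 + q b 2 ^+ 2 + q b 3 ^+ 2)
    = (q a 0 * q b 0) ^+ 2 + (q a 0 * q b 1) ^+ 2 + (q a 0 * q b 2) ^+ 2 + (q a 0 * q b 3) ^+ 2
    + (q a 1 * q b 0) ^+ 2 + (q a 1 * q b 1) ^+ 2 + (q a 1 * q b 2) ^+ 2 + (q a 1 * q b 3) ^+ 2
    + (q a 2 * q b 0) ^+ 2 + (q a 2 * q b 1) ^+ 2 + (q a 2 * q b 2) ^+ 2 + (q a 2 * q b 3) ^+ 2
    + (q a 3 * q b 0) ^+ 2 + (q a 3 * q b 1) ^+ 2 + (q a 3 * q b 2) ^+ 2 + (q a 3 * q b 3) ^+ 2 by ring.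
  rewrite Sa mul1r !ab // in E; rewrite E; move: Hs; rewrite /s; lra.
- exact: RQQ_of_K.
Qed.
End S.
Section C.
Variable R : realType.
Local Notation q := (@qco R).
Implicit Types (x : 'M[R]_4) (f g : 'M[R]_4 -> R) (F G : 'M[R]_4 -> 'rV[R]_4).

Lemma cext {U : topologicalType} x (F G : 'M[R]_4 -> U) : (forall y, F y = G y) -> {for x, continuous G} -> {for x, continuous F}.
Proof. by move=> e; have -> : F = G by apply/funext. Qed.

Lemma cC x (c : R) : {for x, continuous (fun _ : 'M[R]_4 => c)}.
Proof. exact: cst_continuous. Qed.
Lemma cE x i j : {for x, continuous (fun y : 'M[R]_4 => y i j)}.
Proof. exact: coord_continuous. Qed.
Lemma cD x f g : {for x, continuous f} -> {for x, continuous g} -> {for x, continuous (fun y => f y + g y)}.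
Proof. exact: continuousD. Qed.
Lemma cB x f g : {for x, continuous f} -> {for x, continuous g} -> {for x, continuous (fun y => f y - g y)}.
Proof. exact: continuousB. Qed.
Lemma cM x f g : {for x, continuous f} -> {for x, continuous g} -> {for x, continuous (fun y => f y * g y)}.
Proof. exact: continuousM. Qed.
Lemma cN x f : {for x, continuous f} -> {for x, continuous (fun y => - f y)}.
Proof. exact: continuousN. Qed.
Lemma cX x f : {for x, continuous f} -> {for x, continuous (fun y => f y ^+ 2)}.
Proof. by move=> h; apply: (cM h h). Qed.
Lemma cAbs x f : {for x, continuous f} -> {for x, continuous (fun y => `|f y|)}.
Proof. by move=> h; apply: continuous_comp h _; exact: norm_continuous. Qed.
Lemma cIS x f : 0 < f x -> {for x, continuous f} -> {for x, continuous (fun y => (Num.sqrt (f y))^-1)}.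
Proof.
move=> fx h; apply: (continuousV (s := fun y => Num.sqrt (f y))).
  by rewrite sqrtr_eq0 -ltNge.
by apply: continuous_comp h _; exact: sqrt_continuous.
Qed.
Lemma cA x (A : 'M[R]_4) i j : {for x, continuous (fun y => (A *m y) i j)}.
Proof.
apply: cext => [y|]; first by rewrite mxE sum4.
by (repeat apply: cD); apply: cM; first [exact: cC | exact: cE].
Qed.

Lemma cvD x F G : {for x, continuous F} -> {for x, continuous G} -> {for x, continuous (fun y => F y + G y)}.
Proof. exact: continuousD. Qed.
Lemma cvZ x f F : {for x, continuous f} -> {for x, continuous F} -> {for x, continuous (fun y => f y *: F y)}.
Proof. exact: continuousZ. Qed.
Lemma cvN x F : {for x, continuous F} -> {for x, continuous (fun y => - F y)}.
Proof. exact: continuousN. Qed.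
Lemma cq x F k : {for x, continuous F} -> {for x, continuous (fun y => q (F y) k)}.
Proof. by move=> h; apply: (continuous_comp (g := fun p : 'rV[R]_4 => q p k)) => //; exact: coord_continuous. Qed.

Ltac qsimp := rewrite ?(qM0, qM1, qM2, qM3) ?qeE ?mkq0 ?mkq1 ?mkq2 ?mkq3 //=.

Lemma mkq_sum (a0 a1 a2 a3 : R) : mkq a0 a1 a2 a3 =
  a0 *: qe R (inord 0) + a1 *: qe R (inord 1) + a2 *: qe R (inord 2) + a3 *: qe R (inord 3).
Proof. apply: q4P; rewrite !qD !qZ; qsimp; rewrite /=; ring. Qed.

Lemma cmkq x f0 f1 f2 f3 : {for x, continuous f0} -> {for x, continuous f1} -> {for x, continuous f2} ->
  {for x, continuous f3} -> {for x, continuous (fun y => mkq (f0 y) (f1 y) (f2 y) (f3 y))}.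
Proof.
move=> h0 h1 h2 h3; apply: cext => [y|]; first exact: mkq_sum.
by repeat apply: cvD; apply: cvZ => //; exact: cst_continuous.
Qed.

Lemma qmulE (a b : 'rV[R]_4) : qmul a b = mkq (q (qmul a b) 0) (q (qmul a b) 1) (q (qmul a b) 2) (q (qmul a b) 3).
Proof. by apply: q4P; rewrite ?mkq0 ?mkq1 ?mkq2 ?mkq3. Qed.

Ltac cstep := match goal with
 | |- prop_for _ (inPhantom (continuous (fun y => (@?A y) + (@?B y)))) => refine (cD (f:=A) (g:=B) _ _)
 | |- prop_for _ (inPhantom (continuous (fun y => (@?A y) * (@?B y)))) => refine (cM (f:=A) (g:=B) _ _)
 | |- prop_for _ (inPhantom (continuous (fun y => - (@?A y)))) => refine (cN (f:=A) _)
 | |- prop_for _ (inPhantom (continuous (fun y => (@?A y) ^+ 2))) => refine (cX (f:=A) _)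
 | |- prop_for _ (inPhantom (continuous (fun y => `|@?A y|))) => refine (cAbs (f:=A) _)
 | |- prop_for _ (inPhantom (continuous (fun y => qco (@?F y) ?k))) => refine (cq (F:=F) (k:=k) _)
 | |- prop_for _ (inPhantom (continuous (fun y => (?Am *m y) ?i ?j))) => exact: cA
 | |- prop_for _ (inPhantom (continuous (fun y => y ?i ?j))) => exact: cE
 | |- prop_for _ (inPhantom (continuous (fun y => ?c))) => exact: cC
 end.
Ltac cpoly := repeat (cstep || (cbv beta; cstep) || assumption).

Lemma cqmul x F G : {for x, continuous F} -> {for x, continuous G} -> {for x, continuous (fun y => qmul (F y) (G y))}.
Proof.
move=> hF hG; apply: cext => [y|]; first by rewrite qmulE qM0 qM1 qM2 qM3.
apply: cmkq; cpoly.
Qed.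

Lemma cpair x F G : {for x, continuous F} -> {for x, continuous G} -> {for x, continuous (fun y => (F y, G y))}.
Proof. move=> hF hG; rewrite /prop_for /continuous_at; exact: (cvg_pair hF hG). Qed.
End C.
Lemma qN (R : realType) (p : 'rV[R]_4) k : qco (- p) k = - qco p k. Proof. by rewrite /qco mxE. Qed.
Section Ch.
Variable R : realType.
Local Notation q := (@qco R).
Ltac qsimp := rewrite ?(qD, qZ, qN, qM0, qM1, qM2, qM3, mkq0, mkq1, mkq2, mkq3) ?qeE //=.
Arguments Kf : simpl never.

Definition sK (N : 'M[R]_4) := Kf N 0 0 ^+ 2 + Kf N 1 0 ^+ 2 + Kf N 2 0 ^+ 2 + Kf N 3 0 ^+ 2.
Definition psi (N : 'M[R]_4) := ((4^-1 - sK N) + `|4^-1 - sK N|) / 2.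
Definition kcol (N : 'M[R]_4) k := mkq (Kf N 0 k) (Kf N 1 k) (Kf N 2 k) (Kf N 3 k).
Definition vK (N : 'M[R]_4) := kcol N 0 + psi N *: (qmul (kcol N 1) (qe R (inord 1))
   + qmul (kcol N 2) (qe R (inord 2)) + qmul (kcol N 3) (qe R (inord 3))).
Definition kP (N : 'M[R]_4) p r := Kf N 0 p * Kf N 0 r + Kf N 1 p * Kf N 1 r + Kf N 2 p * Kf N 2 r + Kf N 3 p * Kf N 3 r.
Definition krow (N : 'M[R]_4) p := mkq (kP N p 0) (kP N p 1) (kP N p 2) (kP N p 3).
Definition wK (N : 'M[R]_4) := krow N 0 - psi N *: (qmul (qe R (inord 1)) (krow N 1)
   + qmul (qe R (inord 2)) (krow N 2) + qmul (qe R (inord 3)) (krow N 3)).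
Definition nK (N : 'M[R]_4) := sK N + psi N ^+ 2 * (1 - sK N).
Definition gq1 (N : 'M[R]_4) := (Num.sqrt (nK N))^-1 *: vK N.
Definition gq2 (N : 'M[R]_4) := (Num.sqrt (nK N))^-1 *: wK N.


Lemma chart0 (a b : 'rV[R]_4) : S3 R a -> S3 R b ->
  0 < nK (RQQ a b) /\ S3 R (gq1 (RQQ a b)) /\ S3 R (gq2 (RQQ a b)) /\
  (4^-1 <= q b 0 ^+ 2 -> RQQ (gq1 (RQQ a b)) (gq2 (RQQ a b)) = RQQ a b).
Proof.
move=> /S3E Sa /S3E Sb; set N := RQQ a b.
have KN k l : (k < 4)%N -> (l < 4)%N -> Kf N k l = q a k * q b l by exact: K_RQQ.
have sE : sK N = q b 0 ^+ 2.
  rewrite /sK !KN //.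
  transitivity (q b 0 ^+ 2 * (q a 0 ^+ 2 + q a 1 ^+ 2 + q a 2 ^+ 2 + q a 3 ^+ 2)); first by ring.
  by rewrite Sa mulr1.
have b01 : q b 0 ^+ 2 <= 1.
  rewrite -Sb -!addrA lerDl; apply: addr_ge0; [exact: sqr_ge0|]; apply: addr_ge0; exact: sqr_ge0.
have b00 : 0 <= q b 0 ^+ 2 := sqr_ge0 _.
have [pE nKpos] : (4^-1 <= q b 0 ^+ 2 -> psi N = 0) /\ 0 < nK N.
  rewrite /nK /psi sE; case: (lerP 0 (4^-1 - q b 0 ^+ 2)) => ht.
  - rewrite ger0_norm //; split; first by move=> h; (have -> : 4^-1 - q b 0 ^+ 2 = 0 by lra); rewrite addr0 mul0r.
    set t := q b 0 ^+ 2 in ht b01 b00 *.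
    have -> : (4^-1 - t + (4^-1 - t)) / 2 = 4^-1 - t by field.
    case: (ltrP 0 t) => t0.
      by apply: ltr_pwDl => //; apply: mulr_ge0; [exact: sqr_ge0| lra].
    have -> : t = 0 by lra.
    rewrite subr0 add0r subr0; lra.
  - rewrite ltr0_norm // subrr mul0r; split => // .
    by rewrite expr0n /= mul0r addr0; lra.
have Sv : q (vK N) 0 ^+ 2 + q (vK N) 1 ^+ 2 + q (vK N) 2 ^+ 2 + q (vK N) 3 ^+ 2 = nK N.
  rewrite /nK sE /vK /kcol; qsimp; rewrite !KN //.
  move: (psi N) => p.
  transitivity ((q a 0 ^+ 2 + q a 1 ^+ 2 + q a 2 ^+ 2 + q a 3 ^+ 2) *
     (q b 0 ^+ 2 + p ^+ 2 * ((q b 0 ^+ 2 + q b 1 ^+ 2 + q b 2 ^+ 2 + q b 3 ^+ 2) - q b 0 ^+ 2))); first by ring.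
  by rewrite Sa Sb mul1r.
have Sw : q (wK N) 0 ^+ 2 + q (wK N) 1 ^+ 2 + q (wK N) 2 ^+ 2 + q (wK N) 3 ^+ 2 = nK N.
  rewrite /nK sE /wK /krow /kP; qsimp; rewrite !KN //.
  move: (psi N) => p.
  transitivity ((q a 0 ^+ 2 + q a 1 ^+ 2 + q a 2 ^+ 2 + q a 3 ^+ 2) ^+ 2 *
     (q b 0 ^+ 2 + q b 1 ^+ 2 + q b 2 ^+ 2 + q b 3 ^+ 2) *
     (q b 0 ^+ 2 + p ^+ 2 * ((q b 0 ^+ 2 + q b 1 ^+ 2 + q b 2 ^+ 2 + q b 3 ^+ 2) - q b 0 ^+ 2))); first by ring.
  by rewrite Sa Sb expr1n !mul1r.
have rr : (Num.sqrt (nK N))^-1 ^+ 2 = (nK N)^-1 by rewrite exprVn sqr_sqrtr // ltW.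
have hS (u : 'rV[R]_4) : q u 0 ^+ 2 + q u 1 ^+ 2 + q u 2 ^+ 2 + q u 3 ^+ 2 = nK N ->
    S3 R ((Num.sqrt (nK N))^-1 *: u).
  move=> hu; apply/S3E; rewrite !qZ !exprMn -!mulrDr rr hu mulVf //; exact: lt0r_neq0.
split; [done | split; [exact: hS | split; [exact: hS|]]].
move=> hb; have p0 := pE hb.
apply: RQQ_of_K => k l hk hl; rewrite KN //.
have e : nK N = q b 0 ^+ 2 by rewrite /nK sE p0 expr0n /= mul0r addr0.
have rr' : (Num.sqrt (nK N))^-1 * (Num.sqrt (nK N))^-1 = (q b 0 ^+ 2)^-1 by rewrite -expr2 rr e.
have bn : q b 0 ^+ 2 != 0 by apply: lt0r_neq0; apply: lt_le_trans hb; rewrite invr_gt0.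
move: hk hl; rewrite /gq1 /gq2 /vK /wK /kcol /krow /kP p0.
case: k => [|[|[|[|//]]]] _; case: l => [|[|[|[|//]]]] _; qsimp; rewrite !KN //;
 match goal with |- _ = ?X =>
  transitivity ((Num.sqrt (nK N))^-1 * (Num.sqrt (nK N))^-1 * (q b 0 ^+ 2 * (q a 0 ^+ 2 + q a 1 ^+ 2 + q a 2 ^+ 2 + q a 3 ^+ 2)) * X);
  [ring | by rewrite Sa mulr1 rr' mulVf // mul1r] end.
Qed.
End Ch.
Section Fin.
Variable R : realType.
Local Notation q := (@qco R).
Ltac qsimp := rewrite ?(qD, qZ, qN, qM0, qM1, qM2, qM3, mkq0, mkq1, mkq2, mkq3) ?qeE //=.
Arguments Kf : simpl never.

Lemma RQQ_mul (x y a b : 'rV[R]_4) : RQQ x y *m RQQ a b = RQQ (qmul x a) (qmul b y).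
Proof.
apply: mx4P => i j hi hj; rewrite mxE sum4 !RQQE //.
move: hi hj; case: i => [|[|[|[|//]]]] _; case: j => [|[|[|[|//]]]] _; rewrite /rq; qsimp; ring.
Qed.

Definition ebar (n : nat) : 'rV[R]_4 := if n == 0%N then qe R (inord 0) else - qe R (inord n).
Definition Ej (n : nat) : 'M[R]_4 := RQQ (qe R (inord 0)) (ebar n).

Lemma qmul1l (x : 'rV[R]_4) : qmul (qe R (inord 0)) x = x.
Proof. apply: q4P; qsimp; ring. Qed.

Lemma qmul_ebar (b : 'rV[R]_4) n : (n < 4)%N -> qmul (qmul b (ebar n)) (qe R (inord n)) = b.
Proof. case: n => [|[|[|[|//]]]] _; apply: q4P; rewrite /ebar /=; qsimp; ring. Qed.

Lemma S3_ebar (b : 'rV[R]_4) n : (n < 4)%N -> S3 R b -> S3 R (qmul b (ebar n)).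
Proof.
move=> hn /S3E Sb; apply/S3E; rewrite -Sb.
case: n hn => [|[|[|[|//]]]] _; rewrite /ebar /=; qsimp; ring.
Qed.

Lemma S3_qe (b : 'rV[R]_4) n : (n < 4)%N -> S3 R b -> S3 R (qmul b (qe R (inord n))).
Proof.
move=> hn /S3E Sb; apply/S3E; rewrite -Sb.
case: n hn => [|[|[|[|//]]]] _; qsimp; ring.
Qed.

Lemma ebar0 (b : 'rV[R]_4) n : (n < 4)%N -> q (qmul b (ebar n)) 0 = q b n.
Proof. case: n => [|[|[|[|//]]]] _; rewrite /ebar /=; qsimp; ring. Qed.

Lemma Ej_RQQ (a b : 'rV[R]_4) n : Ej n *m RQQ a b = RQQ a (qmul b (ebar n)).
Proof. by rewrite /Ej RQQ_mul qmul1l. Qed.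

Lemma Ej_back (x y a b : 'rV[R]_4) n : (n < 4)%N -> RQQ x y = RQQ a (qmul b (ebar n)) ->
  RQQ x (qmul y (qe R (inord n))) = RQQ a b.
Proof.
move=> hn E.
have -> : RQQ x (qmul y (qe R (inord n))) = RQQ (qe R (inord 0)) (qe R (inord n)) *m RQQ x y.
  by rewrite RQQ_mul qmul1l.
by rewrite E RQQ_mul qmul1l qmul_ebar.
Qed.
End Fin.
Section Cont.
Variable R : realType.
Local Notation q := (@qco R).
Arguments Kf : simpl never.

Lemma cvC (x : 'M[R]_4) (c : 'rV[R]_4) : {for x, continuous (fun _ : 'M[R]_4 => c)}.
Proof. exact: cst_continuous. Qed.

Ltac cstep := match goal with
 | |- prop_for _ (inPhantom (continuous (fun y => (@?A y) + (@?B y)))) => refine (cD (f:=A) (g:=B) _ _)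
 | |- prop_for _ (inPhantom (continuous (fun y => (@?A y) * (@?B y)))) => refine (cM (f:=A) (g:=B) _ _)
 | |- prop_for _ (inPhantom (continuous (fun y => - (@?A y)))) => refine (cN (f:=A) _)
 | |- prop_for _ (inPhantom (continuous (fun y => (@?A y) ^+ 2))) => refine (cX (f:=A) _)
 | |- prop_for _ (inPhantom (continuous (fun y => `|@?A y|))) => refine (cAbs (f:=A) _)
 | |- prop_for _ (inPhantom (continuous (fun y => qco (@?F y) ?k))) => refine (cq (F:=F) (k:=k) _)
 | |- prop_for ?x (inPhantom (continuous (fun y => @fun_of_matrix _ _ _ (@mulmx _ _ _ _ ?Am y) ?i ?j))) => exact: (@cA R x Am i j)
 | |- prop_for ?x (inPhantom (continuous (fun y => @fun_of_matrix _ _ _ y ?i ?j))) => exact: (@cE R x i j)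
 | |- prop_for _ (inPhantom (continuous (fun y => (@?F y) + (@?G y)))) => refine (cvD (F:=F) (G:=G) _ _)
 | |- prop_for _ (inPhantom (continuous (fun y => - (@?F y)))) => refine (cvN (F:=F) _)
 | |- prop_for _ (inPhantom (continuous (fun y => (@?f y) *: (@?F y)))) => refine (cvZ (f:=f) (F:=F) _ _)
 | |- prop_for _ (inPhantom (continuous (fun y => qmul (@?F y) (@?G y)))) => refine (cqmul (F:=F) (G:=G) _ _)
 | |- prop_for _ (inPhantom (continuous (fun y => mkq (@?f0 y) (@?f1 y) (@?f2 y) (@?f3 y)))) =>
      refine (cmkq (f0:=f0) (f1:=f1) (f2:=f2) (f3:=f3) _ _ _ _)
 | |- prop_for _ (inPhantom (continuous (fun y => ?c))) => first [exact: cC | exact: cvC]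
 end.
Ltac cpoly := repeat (cstep || (cbv beta; cstep) || assumption).

Lemma cK (x : 'M[R]_4) (A : 'M[R]_4) k l : (k < 4)%N -> (l < 4)%N ->
  {for x, continuous (fun y => Kf (A *m y) k l)}.
Proof. case: k => [|[|[|[|//]]]] _; case: l => [|[|[|[|//]]]] _; rewrite /Kf /=; cpoly. Qed.

Ltac ct := repeat (match goal with
  | |- prop_for ?x (inPhantom (continuous (fun y => Kf (@mulmx _ _ _ _ ?A y) ?k ?l))) => by apply: (@cK x A k l)
  end || cstep || (cbv beta; cstep) || assumption).

Lemma cgch (n : nat) (x : 'M[R]_4) : 0 < nK (Ej R n *m x) ->
  {for x, continuous (fun y => (gq1 (Ej R n *m y), qmul (gq2 (Ej R n *m y)) (qe R (inord n))))}.
Proof.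
move=> pos; apply: cpair.
- rewrite /gq1; apply: cvZ; last by rewrite /vK /kcol /psi /sK; ct.
  apply: cIS; [exact: pos | rewrite /nK /psi /sK; ct].
- apply: cqmul; last exact: cvC.
  rewrite /gq2; apply: cvZ; last by rewrite /wK /krow /kP /psi /sK; ct.
  apply: cIS; [exact: pos | rewrite /nK /psi /sK; ct].
Qed.
End Cont.
Unset Implicit Arguments.
Theorem theorem14 (R : realType) :
  exists g : 'I_4 -> 'M[R]_4 -> 'rV[R]_4 * 'rV[R]_4,
    (forall i : 'I_4, {within SO4 R, continuous (g i)}) /\
    (forall (i : 'I_4) (M : 'M[R]_4), SO4 R M -> S3 R (g i M).1 /\ S3 R (g i M).2) /\
    (forall M : 'M[R]_4, SO4 R M -> exists i : 'I_4, RQQ (g i M).1 (g i M).2 = M).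
Proof.
exists (fun (i : 'I_4) M => (gq1 (Ej R i *m M), qmul (gq2 (Ej R i *m M)) (qe R (inord i)))).
split; [|split].
- move=> i; apply: continuous_in_subspaceT => M; rewrite in_setE => HM.
  have [a [b [Sa [Sb E]]]] := so4_decomp HM.
  apply: cgch; rewrite -E Ej_RQQ.
  exact: (chart0 Sa (S3_ebar (ltn_ord i) Sb)).1.
- move=> i M HM; have [a [b [Sa [Sb E]]]] := so4_decomp HM; rewrite /= -E Ej_RQQ.
  have [_ [S1 [S2 _]]] := chart0 Sa (S3_ebar (ltn_ord i) Sb).
  by split => //; exact: S3_qe.
- move=> M HM; have [a [b [Sa [Sb E]]]] := so4_decomp HM.
  have [n [hn hb]] : exists n, (n < 4)%N /\ 4^-1 <= qco b n ^+ 2.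
    move/S3E: Sb => Sb.
    case: (lerP 4^-1 (qco b 0 ^+ 2)) => h0; first by exists 0%N.
    case: (lerP 4^-1 (qco b 1 ^+ 2)) => h1; first by exists 1%N.
    case: (lerP 4^-1 (qco b 2 ^+ 2)) => h2; first by exists 2%N.
    case: (lerP 4^-1 (qco b 3 ^+ 2)) => h3; first by exists 3%N.
    clear -h0 h1 h2 h3 Sb; lra.
  exists (inord n); rewrite /= inordK // -E Ej_RQQ.
  have [_ [_ [_ V]]] := chart0 Sa (S3_ebar hn Sb).
  apply: Ej_back => //; apply: V; by rewrite ebar0.
Qed.
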